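(* Let $m\ge2$, let $\mathcal G,\mathcal H_1,\dots,\mathcal H_m$ be real Hilbert spaces, $\boldsymbol{\mathcal H}=\mathcal H_1\oplus\cdots\oplus\mathcal H_m$, $\boldsymbol f\in\Gamma_0(\boldsymbol{\mathcal H})$, and for each $i$ let $L_i:\mathcal H_i\to\mathcal G$ be a bounded linear operator, not all $L_i$ being zero. Set $L_{m+1}=L_1$. Suppose there exists $(z_1,\dots,z_m)\in\boldsymbol{\mathcal H}$ with $\big(L_1^*(L_2z_2-L_1z_1),\dots,L_m^*(L_1z_1-L_mz_m)\big)\in\partial\boldsymbol f(z_1,\dots,z_m)$. Set $\chi=2\max_i\|L_i\|^2$, let $\varepsilon\in]0,2/(\chi+1)[$ and let $(\gamma_n)_n$ be a sequence in $[\varepsilon,(2-\varepsilon)/\chi]$. For each $i$ let $x_{i,0}\in\mathcal H_i$ and let $(a_{i,n})_n,(b_{i,n})_n$ be absolutely summable sequences in $\mathcal H_i$; set $x_{m+1,n}=x_{1,n}$. For every $n$ define $y_{i,n}=x_{i,n}-\gamma_n\big(L_i^*(L_ix_{i,n}-L_{i+1}x_{i+1,n})+a_{i,n}\big)$ for $i=1,\dots,m$, and $(x_{1,n+1},\dots,x_{m,n+1})=\operatorname{prox}_{\gamma_n\boldsymbol f}(y_{1,n},\dots,y_{m,n})+(b_{1,n},\dots,b_{m,n})$. Then there exists $(\overline x_1,\dots,\overline x_m)\in\boldsymbol{\mathcal H}$ (with $\overline x_{m+1}=\overline x_1$) such that for every $i$, $\overline x_i\in\operatorname{Argmin}_{x\in\mathcal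 H_i}\big(\boldsymbol f(\overline x_1,\dots,\overline x_{i-1},x,\overline x_{i+1},\dots,\overline x_m)+\tfrac12\|L_ix-L_{i+1}\overline x_{i+1}\|^2\big)$, and $x_{i,n}\rightharpoonup\overline x_i$ and $L_i^*\big(L_i(x_{i,n}-\overline x_i)-L_{i+1}(x_{i+1,n}-\overline x_{i+1})\big)\to0$.
   Context: $\boldsymbol{\mathcal H}$ carries the inner product $\sum_i\langle x_i,y_i\rangle$. $\Gamma_0(\mathcal K)$ denotes the proper lower semicontinuous convex functions $\mathcal K\to\left]-\infty,+\infty\right]$; $\partial$ the subdifferential; $L_i^*$ the adjoint; $\|L_i\|$ the operator norm. For $\varphi\in\Gamma_0(\mathcal K)$, $\operatorname{prox}_\varphi x=\operatorname{argmin}_y\big(\varphi(y)+\tfrac12\|x-y\|^2\big)$. $\rightharpoonup$ denotes weak convergence, $\to$ strong convergence. *)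

(* Defs.v *)
From Stdlib Require Import Reals Lra Lia Arith List Classical.
Open Scope R_scope.
Set Implicit Arguments.

Record Hilbert := mkHilbert {
  car :> Type;
  hzero : car;
  hadd : car -> car -> car;
  hopp : car -> car;
  hscal : R -> car -> car;
  hinner : car -> car -> R;
  hadd_assoc : forall x y z, hadd x (hadd y z) = hadd (hadd x y) z;
  hadd_comm : forall x y, hadd x y = hadd y x;
  hadd_0 : forall x, hadd hzero x = x;
  hadd_opp : forall x, hadd x (hopp x) = hzero;
  hscal_assoc : forall a b x, hscal a (hscal b x) = hscal (a * b) x;
  hscal_1 : forall x, hscal 1 x = x;
  hscal_distr_v : forall a x y, hscal a (hadd x y) = hadd (hscal a x) (hscal a y);
  hscal_distr_s : forall a b x, hscal (a + b) x = hadd (hscal a x) (hscal b x);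
  hinner_sym : forall x y, hinner x y = hinner y x;
  hinner_add_l : forall x y z, hinner (hadd x y) z = hinner x z + hinner y z;
  hinner_scal_l : forall a x y, hinner (hscal a x) y = a * hinner x y;
  hinner_pos : forall x, 0 <= hinner x x;
  hinner_def : forall x, hinner x x = 0 -> x = hzero;
  hcomplete : forall u : nat -> car,
    (forall eps, eps > 0 -> exists N, forall p q, (p >= N)%nat -> (q >= N)%nat ->
        sqrt (hinner (hadd (u p) (hopp (u q))) (hadd (u p) (hopp (u q)))) < eps) ->
    exists l, Un_cv (fun n => sqrt (hinner (hadd (u n) (hopp l)) (hadd (u n) (hopp l)))) 0
}.
Arguments hzero {h}.
Arguments hadd {h} _ _.
Arguments hopp {h} _.
Arguments hscal {h} _ _.
Arguments hinner {h} _ _.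

Definition hsub {H : Hilbert} (x y : H) : H := hadd x (hopp y).
Definition hnorm {H : Hilbert} (x : H) : R := sqrt (hinner x x).

Definition weak_cv {H : Hilbert} (u : nat -> H) (l : H) : Prop :=
  forall v : H, Un_cv (fun n => hinner (u n) v) (hinner l v).

Definition strong_cv {H : Hilbert} (u : nat -> H) (l : H) : Prop :=
  Un_cv (fun n => hnorm (hsub (u n) l)) 0.

Definition is_linear {H K : Hilbert} (L : H -> K) : Prop :=
  (forall x y, L (hadd x y) = hadd (L x) (L y)) /\
  (forall a x, L (hscal a x) = hscal a (L x)).

Definition is_bounded_linear {H K : Hilbert} (L : H -> K) : Prop :=
  is_linear L /\ exists M, forall x, hnorm (L x) <= M * hnorm x.

Definition is_adjoint {H K : Hilbert} (L : H -> K) (Ls : K -> H) : Prop :=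
  forall x y, hinner (L x) y = hinner x (Ls y).

Definition is_opnorm {H K : Hilbert} (L : H -> K) (c : R) : Prop :=
  is_lub (fun r => exists x : H, hnorm x <= 1 /\ r = hnorm (L x)) c.

(** finite index set {0,...,m-1} (index i here is H_{i+1} in the paper) *)
Definition Idx (m : nat) := {i : nat | (i < m)%nat}.

Lemma next_lt : forall m k, (k < m)%nat -> ((S k) mod m < m)%nat.
Proof. intros m k H. apply Nat.mod_upper_bound. lia. Qed.

(** cyclic successor: m-1 goes to 0 (this realises L_{m+1} = L_1, x_{m+1} = x_1) *)
Definition next {m} (i : Idx m) : Idx m :=
  exist _ ((S (proj1_sig i)) mod m) (next_lt (proj2_sig i)).

Definition Idx_eq_dec {m} (i j : Idx m) : {i = j} + {i <> j}.
Proof.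
  destruct i as [i Hi], j as [j Hj].
  destruct (Nat.eq_dec i j) as [e|ne].
  - left. subst. f_equal. apply Peano_dec.le_unique.
  - right. intro E. apply ne. inversion E. reflexivity.
Defined.

Definition sumIdx (m : nat) (g : Idx m -> R) : R :=
  fold_right Rplus 0
    (map (fun k => match lt_dec k m with
                   | left p => g (exist _ k p)
                   | right _ => 0 end) (seq 0 m)).

Definition maxIdx (m : nat) (g : Idx m -> R) : R :=
  fold_right Rmax 0
    (map (fun k => match lt_dec k m with
                   | left p => g (exist _ k p)
                   | right _ => 0 end) (seq 0 m)).

Definition Prod {m} (H : Idx m -> Hilbert) := forall i : Idx m, car (H i).

Definition padd {m} {H : Idx m -> Hilbert} (x y : Prod H) : Prod H :=
  fun i => hadd (x i) (y i).
Definition pscal {m} {H : Idx m -> Hilbert} (a : R) (x : Prod H) : Prod H :=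
  fun i => hscal a (x i).
Definition psub {m} {H : Idx m -> Hilbert} (x y : Prod H) : Prod H :=
  fun i => hsub (x i) (y i).
Definition pinner {m} {H : Idx m -> Hilbert} (x y : Prod H) : R :=
  sumIdx (fun i => hinner (x i) (y i)).
Definition pnorm {m} {H : Idx m -> Hilbert} (x : Prod H) : R := sqrt (pinner x x).

Definition upd {m} {H : Idx m -> Hilbert} (xb : Prod H) (i : Idx m) (x : H i) : Prod H :=
  fun j => match Idx_eq_dec i j with
           | left e => eq_rect i (fun k => car (H k)) x j e
           | right _ => xb j
           end.

Inductive ER := Fin (r : R) | PInf.

Definition ERle (a b : ER) : Prop :=
  match a, b with
  | _, PInf => True
  | PInf, Fin _ => False
  | Fin x, Fin y => x <= y
  end.

Definition ERadd (a b : ER) : ER :=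
  match a, b with Fin x, Fin y => Fin (x + y) | _, _ => PInf end.

(** scaling by a (positive) real *)
Definition ERscal (c : R) (a : ER) : ER :=
  match a with Fin x => Fin (c * x) | PInf => PInf end.

Definition proper {m} {H : Idx m -> Hilbert} (f : Prod H -> ER) : Prop :=
  exists x, f x <> PInf.

Definition convex {m} {H : Idx m -> Hilbert} (f : Prod H -> ER) : Prop :=
  forall x y t, 0 < t < 1 ->
    ERle (f (padd (pscal t x) (pscal (1 - t) y)))
         (ERadd (ERscal t (f x)) (ERscal (1 - t) (f y))).

Definition lsc {m} {H : Idx m -> Hilbert} (f : Prod H -> ER) : Prop :=
  forall (r : R) (u : nat -> Prod H) (x : Prod H),
    (forall n, ERle (f (u n)) (Fin r)) ->
    Un_cv (fun n => pnorm (psub (u n) x)) 0 ->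
    ERle (f x) (Fin r).

Definition Gamma0 {m} {H : Idx m -> Hilbert} (f : Prod H -> ER) : Prop :=
  proper f /\ convex f /\ lsc f.

Definition in_subdiff {m} {H : Idx m -> Hilbert} (f : Prod H -> ER) (x u : Prod H) : Prop :=
  f x <> PInf /\
  forall y, ERle (ERadd (Fin (pinner (psub y x) u)) (f x)) (f y).

Definition is_prox {m} {H : Idx m -> Hilbert} (g : R) (f : Prod H -> ER) (x p : Prod H) : Prop :=
  forall y, ERle (ERadd (ERscal g (f p)) (Fin (/2 * (pnorm (psub x p))^2)))
                 (ERadd (ERscal g (f y)) (Fin (/2 * (pnorm (psub x y))^2))).

Definition abs_summable {H : Hilbert} (a : nat -> H) : Prop :=
  exists B, forall N, sum_f_R0 (fun n => hnorm (a n)) N <= B.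

(* Main.v *)
Require Import Defs.
From Stdlib Require Import Reals Lra Lia ZArith Arith List Classical FunctionalExtensionality ClassicalEpsilon Eqdep_dec.
Open Scope R_scope.

Arguments hadd_assoc {h}. Arguments hadd_comm {h}. Arguments hadd_0 {h}. Arguments hadd_opp {h}.
Arguments hscal_assoc {h}. Arguments hscal_1 {h}. Arguments hscal_distr_v {h}. Arguments hscal_distr_s {h}.
Arguments hinner_sym {h}. Arguments hinner_add_l {h}. Arguments hinner_scal_l {h}. Arguments hinner_pos {h}.
Arguments hinner_def {h}. Arguments hcomplete {h}.

Section HB.
Variable K : Hilbert.
Implicit Types x y z u v w : K.

Lemma hadd_0r x : hadd x hzero = x.
Proof. rewrite hadd_comm; apply hadd_0. Qed.

Lemma hopp_l x : hadd (hopp x) x = hzero.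
Proof. rewrite hadd_comm; apply hadd_opp. Qed.

Lemma hself_zero u : hadd u u = u -> u = hzero.
Proof.
  intro E. rewrite <- (hadd_opp u). rewrite <- E at 2.
  rewrite <- hadd_assoc, hadd_opp, hadd_0r. reflexivity.
Qed.

Lemma hscal_0 x : hscal 0 x = @hzero K.
Proof.
  apply hself_zero. rewrite <- hscal_distr_s. f_equal. ring.
Qed.

Lemma hinner_0l y : hinner (@hzero K) y = 0.
Proof.
  rewrite <- (hscal_0 hzero), hinner_scal_l. ring.
Qed.

Lemma hinner_opp_l x y : hinner (hopp x) y = - hinner x y.
Proof.
  assert (hinner (hadd x (hopp x)) y = 0) by (rewrite hadd_opp; apply hinner_0l).
  rewrite hinner_add_l in H. lra.
Qed.

Lemma hinner_add_r x y z : hinner x (hadd y z) = hinner x y + hinner x z.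
Proof. rewrite hinner_sym, hinner_add_l, (hinner_sym y), (hinner_sym z); auto. Qed.
Lemma hinner_scal_r a x y : hinner x (hscal a y) = a * hinner x y.
Proof. rewrite hinner_sym, hinner_scal_l, (hinner_sym y); auto. Qed.
Lemma hinner_opp_r x y : hinner x (hopp y) = - hinner x y.
Proof. rewrite hinner_sym, hinner_opp_l, (hinner_sym y); auto. Qed.
Lemma hinner_0r x : hinner x (@hzero K) = 0.
Proof. rewrite hinner_sym; apply hinner_0l. Qed.
Lemma hinner_sub_l x y z : hinner (hsub x y) z = hinner x z - hinner y z.
Proof. unfold hsub. rewrite hinner_add_l, hinner_opp_l. ring. Qed.
Lemma hinner_sub_r x y z : hinner x (hsub y z) = hinner x y - hinner x z.
Proof. unfold hsub. rewrite hinner_add_r, hinner_opp_r. ring. Qed.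

Lemma veq u v : hinner (hsub u v) (hsub u v) = 0 -> u = v.
Proof.
  intro E. apply hinner_def in E. unfold hsub in E.
  rewrite <- (hadd_0 v). rewrite <- E.
  rewrite <- hadd_assoc, hopp_l, hadd_0r. reflexivity.
Qed.

Lemma hnorm_sq x : hnorm x ^ 2 = hinner x x.
Proof. unfold hnorm. apply pow2_sqrt, hinner_pos. Qed.
Lemma hnorm_pos x : 0 <= hnorm x.
Proof. apply sqrt_pos. Qed.

Lemma cs_sq x y : (hinner x y)^2 <= hinner x x * hinner y y.
Proof.
  pose proof (hinner_pos x). pose proof (hinner_pos y).
  destruct (Req_dec (hinner y y) 0) as [E|E].
  - destruct (Req_dec (hinner x y) 0) as [E2|E2].
    + rewrite E2, E. nra.
    + pose proof (hinner_pos (hsub x (hscal ((hinner x x + 1) / (2 * hinner x y)) y))) as P.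
      rewrite !hinner_sub_l, !hinner_sub_r, !hinner_scal_l, !hinner_scal_r in P.
      rewrite (hinner_sym y x), E in P.
      assert ((hinner x x + 1) / (2 * hinner x y) * hinner x y = (hinner x x + 1)/2) by (field; auto).
      exfalso. nra.
  - pose proof (hinner_pos (hsub x (hscal (hinner x y / hinner y y) y))) as P.
    rewrite !hinner_sub_l, !hinner_sub_r, !hinner_scal_l, !hinner_scal_r in P.
    rewrite (hinner_sym y x) in P.
    assert (0 < hinner y y) by lra.
    assert (A1: hinner x y / hinner y y * hinner x y = hinner x y ^ 2 / hinner y y) by (field; auto).
    assert (A2: hinner x y / hinner y y * (hinner x y / hinner y y * hinner y y) = hinner x y ^ 2 / hinner y y) by (field; auto).
    assert (A3: hinner x y ^ 2 / hinner y y * hinner y y = hinner x y ^ 2) by (field; auto).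
    assert (hinner x y ^ 2 / hinner y y <= hinner x x) by nra.
    apply (Rmult_le_compat_r (hinner y y)) in H2; [|lra]. nra.
Qed.

Lemma cs x y : hinner x y <= hnorm x * hnorm y.
Proof.
  unfold hnorm. rewrite <- sqrt_mult_alt by apply hinner_pos.
  destruct (Rle_or_lt (hinner x y) 0). { pose proof (sqrt_pos (hinner x x * hinner y y)); lra. }
  rewrite <- (sqrt_square (hinner x y)) by lra.
  apply sqrt_le_1_alt. pose proof (cs_sq x y). simpl in H0. lra.
Qed.

Lemma hnorm_opp x : hnorm (hopp x) = hnorm x.
Proof. unfold hnorm. rewrite hinner_opp_l, hinner_opp_r. f_equal; ring. Qed.

Lemma cs_abs x y : Rabs (hinner x y) <= hnorm x * hnorm y.
Proof.
  unfold Rabs; destruct Rcase_abs.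
  - pose proof (cs x (hopp y)). rewrite hinner_opp_r, hnorm_opp in H. exact H.
  - apply cs.
Qed.

Lemma tri x y : hnorm (hadd x y) <= hnorm x + hnorm y.
Proof.
  pose proof (hnorm_pos x). pose proof (hnorm_pos y). pose proof (hnorm_pos (hadd x y)).
  apply Rsqr_incr_0_var; [|nra]. unfold Rsqr.
  assert (hnorm (hadd x y) * hnorm (hadd x y) = hinner (hadd x y) (hadd x y)) by (rewrite <- hnorm_sq; ring).
  rewrite H2, (@hinner_add_l K), !hinner_add_r, (hinner_sym y x).
  pose proof (cs x y). pose proof (hnorm_sq x). pose proof (hnorm_sq y). simpl in *. nra.
Qed.

End HB.

Create HintDb iexp.
#[export] Hint Rewrite @hinner_sub_l @hinner_sub_r @hinner_add_l @hinner_add_r @hinner_scal_l hinner_scal_r hinner_opp_l hinner_opp_r hinner_0l hinner_0r : iexp.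

Ltac symnorm :=
  repeat match goal with |- context [hinner ?a ?b] =>
    tryif constr_eq a b then fail else
    match goal with |- context [hinner b a] => rewrite (hinner_sym b a) end end.
Ltac iexp := autorewrite with iexp; symnorm.
Definition closedS {K : Hilbert} (C : K -> Prop) :=
  forall (u : nat -> K) x, (forall n, C (u n)) ->
    Un_cv (fun n => hinner (hsub (u n) x) (hsub (u n) x)) 0 -> C x.
Definition convexS {K : Hilbert} (C : K -> Prop) :=
  forall x y t, 0 <= t <= 1 -> C x -> C y -> C (hadd (hscal t x) (hscal (1-t) y)).

Lemma cv_shift (u : nat -> R) l N : Un_cv u l -> Un_cv (fun k => u (k + N)%nat) l.
Proof.
  intros H e He. destruct (H e He) as [N0 HN]. exists N0. intros n Hn. apply HN. lia.
Qed.

Lemma sqrt_cv_sq (a : nat -> R) : (forall n, 0 <= a n) -> Un_cv (fun n => sqrt (a n)) 0 -> Un_cv a 0.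
Proof.
  intros P H. replace 0 with (0 * 0) by ring.
  eapply Un_cv_ext. 2: apply (CV_mult _ _ _ _ H H). intro n. simpl. apply sqrt_sqrt, P.
Qed.

Lemma sq_cv_sqrt (a : nat -> R) : (forall n, 0 <= a n) -> Un_cv a 0 -> Un_cv (fun n => sqrt (a n)) 0.
Proof.
  intros P H e He. destruct (H (e*e)) as [N HN]. nra. exists N. intros n Hn.
  specialize (HN n Hn). unfold R_dist in *. rewrite Rminus_0_r in *.
  rewrite Rabs_right in HN by (specialize (P n); lra).
  rewrite Rabs_right by (apply Rle_ge, sqrt_pos).
  rewrite <- (sqrt_square e) by lra. apply sqrt_lt_1_alt. split; auto.
Qed.

Lemma cv_ge (u : nat -> R) l a : Un_cv u l -> (exists N, forall n, (n >= N)%nat -> a <= u n) -> a <= l.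
Proof.
  intros H [N HN]. destruct (Rle_or_lt a l) as [|Hlt]; auto. exfalso.
  destruct (H (a - l)) as [N0 H0]. lra.
  specialize (H0 (N + N0)%nat ltac:(lia)). specialize (HN (N+N0)%nat ltac:(lia)).
  unfold R_dist in H0. apply Rabs_def2 in H0. lra.
Qed.

Lemma cv_le (u : nat -> R) l a : Un_cv u l -> (exists N, forall n, (n >= N)%nat -> u n <= a) -> l <= a.
Proof.
  intros H [N HN]. assert (- a <= - l). apply (cv_ge (fun n => - u n)).
  intros e He. destruct (H e He) as [N0 H0]. exists N0. intros n Hn. unfold R_dist in *.
  replace (- u n - - l) with (- (u n - l)) by ring. rewrite Rabs_Ropp. auto.
  exists N. intros n Hn. specialize (HN n Hn). lra. lra.
Qed.

Lemma INR_inv_small e : 0 < e -> exists N, forall n, (n >= N)%nat -> / (INR n + 1) < e.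
Proof.
  intros He. destruct (archimed (/ e)) as [A _].
  destruct (Z.le_gt_cases (up (/ e)) 0).
  - exists 0%nat. intros n _. assert (/ e > 0) by (apply Rinv_0_lt_compat; lra).
    apply IZR_le in H. lra.
  - exists (Z.to_nat (up (/e))). intros n Hn.
    assert (INR n >= IZR (up (/ e))). { rewrite <- (Z2Nat.id (up (/e))) by lia. rewrite <- INR_IZR_INZ. apply Rle_ge, le_INR. lia. }
    pose proof (pos_INR n).
    rewrite <- (Rinv_inv e). apply Rinv_lt_contravar. 
    assert (/ e > 0) by (apply Rinv_0_lt_compat; lra). nra. lra.
Qed.

Lemma ccp (K : Hilbert) (w : nat -> K) (M : R) :
  (forall n, hinner (w n) (w n) <= M) ->
  exists c, forall C, closedS C -> convexS C ->
    (exists N, forall n, (n >= N)%nat -> C (w n)) -> C c.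
Proof.
  intros HM.
  set (T := fun N (x:K) => forall C, closedS C -> convexS C -> (forall n, (n >= N)%nat -> C (w n)) -> C x).
  assert (Tmono: forall N M' x, (N <= M')%nat -> T M' x -> T N x).
  { intros N M' x HNM Hx C Cc Cv Ht. apply Hx; auto. intros n Hn. apply Ht. lia. }
  assert (Tw: forall N, T N (w N)). { intros N C _ _ Ht. apply Ht. lia. }
  assert (Tconv: forall N, convexS (T N)).
  { intros N x y t Ht Hx Hy C Cc Cv Htl. apply Cv; [exact Ht | apply Hx | apply Hy]; auto. }
  set (E := fun N r => exists y, T N y /\ r = - hinner y y).
  assert (lubs: forall N, {l | is_lub (E N) l}).
  { intro N. apply completeness.
    - exists 0. intros r [y [_ ->]]. pose proof (hinner_pos y). lra.
    - exists (- hinner (w N) (w N)). exists (w N). split; auto. }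
  set (lam := fun N => proj1_sig (lubs N)).
  assert (Hlam: forall N, is_lub (E N) (lam N)) by (intro; exact (proj2_sig (lubs N))).
  assert (Dlow: forall N y, T N y -> - lam N <= hinner y y).
  { intros N y Hy. destruct (Hlam N) as [Hub _]. assert (E N (- hinner y y)) by (exists y; auto).
    specialize (Hub _ H). lra. }
  assert (Dup: forall N, - lam N <= M). { intro N. specialize (Dlow N _ (Tw N)). specialize (HM N). lra. }
  assert (Dmono: forall N, lam (S N) <= lam N).
  { intro N. destruct (Hlam (S N)) as [_ Hl]. apply Hl. intros r [y [Hy ->]].
    destruct (Hlam N) as [Hub _]. apply Hub. exists y. split; auto. apply (Tmono N (S N)); auto. }
  assert (ychoose: forall N, exists y, T N y /\ hinner y y < - lam N + / (INR N + 1)).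
  { intro N. apply NNPP. intro Hn.
    assert (Hpos: 0 < / (INR N + 1)) by (apply Rinv_0_lt_compat; pose proof (pos_INR N); lra).
    destruct (Hlam N) as [_ Hl]. assert (lam N <= lam N - / (INR N + 1)).
    { apply Hl. intros r [y [Hy ->]]. destruct (Rle_or_lt (- hinner y y) (lam N - / (INR N + 1))); auto.
      exfalso. apply Hn. exists y. split; auto. lra. }
    lra. }
  set (yy := fun N => proj1_sig (constructive_indefinite_description _ (ychoose N))).
  assert (Hyy: forall N, T N (yy N) /\ hinner (yy N) (yy N) < - lam N + / (INR N + 1))
    by (intro N; exact (proj2_sig (constructive_indefinite_description _ (ychoose N)))).
  destruct (growing_cv (fun N => - lam N)) as [Dl HDl].
  { intro N. specialize (Dmono N). lra. }
  { exists M. intros r [N ->]. auto. }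
  assert (par: forall p q, (p <= q)%nat ->
     hinner (hsub (yy p) (yy q)) (hsub (yy p) (yy q)) <=
       2 * (- lam q - - lam p) + 2 * / (INR p + 1) + 2 * / (INR q + 1)).
  { intros p q Hpq.
    assert (Tm: T p (hadd (hscal (/2) (yy p)) (hscal (1 - /2) (yy q)))).
    { apply Tconv. lra. apply Hyy. apply (Tmono p q); auto. apply Hyy. }
    pose proof (Dlow _ _ Tm) as D1. destruct (Hyy p) as [_ Yp]. destruct (Hyy q) as [_ Yq].
    revert D1; iexp; intro D1. lra. }
  assert (Cauchy: forall e, e > 0 -> exists N, forall p q, (p >= N)%nat -> (q >= N)%nat ->
      sqrt (hinner (hadd (yy p) (hopp (yy q))) (hadd (yy p) (hopp (yy q)))) < e).
  { intros e He.
    destruct (HDl (e*e/16)) as [N1 HN1]. nra.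
    destruct (INR_inv_small (e*e/16)) as [N2 HN2]. nra.
    exists (N1 + N2)%nat. intros p q Hp Hq.
    rewrite <- (sqrt_square e) by lra. apply sqrt_lt_1_alt. split. apply hinner_pos.
    pose proof (HN1 p ltac:(lia)) as A1. pose proof (HN1 q ltac:(lia)) as A2.
    pose proof (HN2 p ltac:(lia)) as B1. pose proof (HN2 q ltac:(lia)) as B2.
    unfold R_dist in A1, A2. apply Rabs_def2 in A1. apply Rabs_def2 in A2.
    destruct (le_ge_dec p q) as [Hpq|Hpq].
    - pose proof (par p q Hpq). fold (hsub (yy p) (yy q)). lra.
    - pose proof (par q p Hpq). fold (hsub (yy p) (yy q)).
      assert (hinner (hsub (yy p) (yy q)) (hsub (yy p) (yy q)) = hinner (hsub (yy q) (yy p)) (hsub (yy q) (yy p))) by (iexp; ring).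
      lra. }
  destruct (hcomplete yy Cauchy) as [c Hc].
  exists c. intros C Cc Cv [N HN]. apply (Cc (fun k => yy (k + N)%nat)).
  - intro k. apply (proj1 (Hyy (k+N)%nat)); auto. intros n Hn. apply HN. lia.
  - apply (cv_shift (fun n => hinner (hsub (yy n) c) (hsub (yy n) c))).
    apply sqrt_cv_sq. intro; apply hinner_pos. exact Hc.
Qed.
Lemma hnorm_scal (K : Hilbert) g (u : K) : hnorm (hscal g u) = Rabs g * hnorm u.
Proof.
  unfold hnorm. rewrite hinner_scal_l, hinner_scal_r, <- Rmult_assoc.
  rewrite sqrt_mult_alt by (pose proof (Rle_0_sqr g); unfold Rsqr in H; lra).
  f_equal. rewrite <- sqrt_Rsqr_abs. reflexivity.
Qed.

Lemma hnorm_sub_sym (K : Hilbert) (u v : K) : hnorm (hsub u v) = hnorm (hsub v u).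
Proof. unfold hnorm. f_equal. iexp. ring. Qed.

Lemma hnorm_sq_le (K : Hilbert) (u : K) r : 0 <= r -> hnorm u <= r -> hinner u u <= r * r.
Proof. intros. rewrite <- hnorm_sq. pose proof (hnorm_pos _ u). simpl. nra. Qed.

Lemma cv_bounded (u : nat -> R) l : Un_cv u l -> exists R, forall n, Rabs (u n) <= R.
Proof.
  intros H. destruct (H 1) as [N HN]. lra.
  assert (forall M, exists R, forall n, (n <= M)%nat -> Rabs (u n) <= R).
  { induction M. exists (Rabs (u 0%nat)). intros n Hn. replace n with 0%nat by lia. lra.
    destruct IHM as [R HR]. exists (Rmax R (Rabs (u (S M)))). intros n Hn.
    destruct (Nat.eq_dec n (S M)). subst. apply Rmax_r. eapply Rle_trans. apply HR. lia. apply Rmax_l. }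
  destruct (H0 N) as [R HR]. exists (Rmax R (Rabs l + 1)). intros n.
  destruct (le_gt_dec n N). eapply Rle_trans. apply HR; auto. apply Rmax_l.
  eapply Rle_trans. 2: apply Rmax_r. specialize (HN n ltac:(lia)). unfold R_dist in HN.
  pose proof (Rabs_triang_inv (u n) l). lra.
Qed.

Lemma squeeze0 (u w : nat -> R) : (forall n, 0 <= u n) -> (exists N, forall n, (n >= N)%nat -> u n <= w n) -> Un_cv w 0 -> Un_cv u 0.
Proof.
  intros P [N0 HN0] H e He. destruct (H e He) as [N HN]. exists (N + N0)%nat. intros n Hn.
  specialize (HN n ltac:(lia)). specialize (HN0 n ltac:(lia)). specialize (P n). unfold R_dist in *.
  rewrite Rminus_0_r in *. rewrite Rabs_right in * by lra. lra.
Qed.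

Lemma sum_nonneg_cv0 (e : nat -> R) A : (forall n, 0 <= e n) -> (forall N, sum_f_R0 e N <= A) -> Un_cv e 0.
Proof.
  intros P HA. destruct (growing_cv (fun N => sum_f_R0 e N)) as [l Hl].
  { intro n. simpl. specialize (P (S n)). lra. }
  { exists A. intros r [N ->]. auto. }
  assert (Un_cv (fun n => sum_f_R0 e (S n) - sum_f_R0 e n) (l - l)).
  { apply CV_minus; auto. intros eps He. destruct (Hl eps He) as [N HN]. exists N. intros. apply HN. lia. }
  replace 0 with (l - l) by ring. intros eps He. destruct (H eps He) as [N HN]. exists (S N). intros n Hn.
  destruct n. lia. specialize (HN n ltac:(lia)). simpl in HN. replace (sum_f_R0 e n + e (S n) - sum_f_R0 e n) with (e (S n)) in HN by ring. exact HN.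
Qed.

Lemma qfejer (r e : nat -> R) A : (forall n, 0 <= e n) -> (forall N, sum_f_R0 e N <= A) ->
  (forall n, 0 <= r n) -> (forall n, r (S n) <= r n + e n) -> exists l, Un_cv r l.
Proof.
  intros Pe HA Pr Hr.
  set (S' := fun n => match n with O => 0 | S k => sum_f_R0 e k end).
  destruct (decreasing_cv (fun n => r n - S' n)) as [l1 Hl1].
  { intro n. specialize (Hr n). destruct n; simpl in *; lra. }
  { exists A. intros x [n ->]. unfold opp_seq. specialize (Pr n). destruct n; simpl. specialize (HA 0%nat). simpl in HA. specialize (Pe 0%nat). lra. specialize (HA n). lra. }
  destruct (growing_cv S') as [l2 Hl2].
  { intro n. destruct n; simpl. apply Pe. specialize (Pe (S n)). lra. }
  { exists A. intros x [n ->]. destruct n; simpl. specialize (HA 0%nat). simpl in HA. specialize (Pe 0%nat). lra. apply HA. }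
  exists (l1 + l2). eapply Un_cv_ext. 2: apply (CV_plus _ _ _ _ Hl1 Hl2). intro n. simpl. ring.
Qed.

Lemma cv_sub (u : nat -> R) l (s : nat -> nat) : (forall k, (s k >= k)%nat) -> Un_cv u l -> Un_cv (fun k => u (s k)) l.
Proof. intros Hs H e He. destruct (H e He) as [N HN]. exists N. intros n Hn. apply HN. specialize (Hs n). lia. Qed.

Lemma cv_eventually_lt (u : nat -> R) l a : Un_cv u l -> l < a -> exists N, forall n, (n >= N)%nat -> u n < a.
Proof. intros H Hl. destruct (H (a - l)) as [N HN]. lra. exists N. intros n Hn. specialize (HN n Hn). unfold R_dist in HN. apply Rabs_def2 in HN. lra. Qed.

Lemma cv_eventually_gt (u : nat -> R) l a : Un_cv u l -> a < l -> exists N, forall n, (n >= N)%nat -> a < u n.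
Proof. intros H Hl. destruct (H (l - a)) as [N HN]. lra. exists N. intros n Hn. specialize (HN n Hn). unfold R_dist in HN. apply Rabs_def2 in HN. lra. Qed.

Lemma sum_f_lin (e1 e2 : nat -> R) c N : sum_f_R0 (fun n => c * e1 n + e2 n) N = c * sum_f_R0 e1 N + sum_f_R0 e2 N.
Proof. induction N; simpl. ring. rewrite IHN. ring. Qed.

Lemma cv_bnd_mult (u w : nat -> R) R : (forall n, Rabs (u n) <= R) -> Un_cv w 0 -> Un_cv (fun n => u n * w n) 0.
Proof.
  intros Hu Hw e He. destruct (Hw (e / (Rabs R + 1))) as [N HN].
  apply Rdiv_lt_0_compat; auto. pose proof (Rabs_pos R); lra.
  exists N. intros n Hn. specialize (HN n Hn). unfold R_dist in *. rewrite Rminus_0_r in *.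
  rewrite Rabs_mult. specialize (Hu n). pose proof (Rabs_pos (u n)). pose proof (Rabs_pos (w n)).
  assert (R <= Rabs R) by apply RRle_abs.
  apply Rle_lt_trans with ((Rabs R + 1) * Rabs (w n)). nra.
  assert (Rabs R + 1 > 0) by (pose proof (Rabs_pos R); lra).
  apply (Rmult_lt_compat_l (Rabs R + 1)) in HN; auto. field_simplify in HN; lra.
Qed.
Lemma tri_sub (K : Hilbert) (u w : K) : hnorm (hsub u w) <= hnorm u + hnorm w.
Proof. unfold hsub. rewrite <- (hnorm_opp _ w). apply tri. Qed.

Lemma inner_cv (K : Hilbert) (u : nat -> K) x w :
  Un_cv (fun n => hnorm (hsub (u n) x)) 0 -> Un_cv (fun n => hinner (u n) w) (hinner x w).
Proof.
  intros H e He. destruct (H (e / (hnorm w + 1))) as [N HN].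
  apply Rdiv_lt_0_compat; auto. pose proof (hnorm_pos _ w); lra.
  exists N. intros n Hn. specialize (HN n Hn). unfold R_dist in *. rewrite Rminus_0_r in HN.
  rewrite Rabs_right in HN by (apply Rle_ge, hnorm_pos).
  replace (hinner (u n) w - hinner x w) with (hinner (hsub (u n) x) w) by (iexp; ring).
  eapply Rle_lt_trans. apply cs_abs. pose proof (hnorm_pos _ w). pose proof (hnorm_pos _ (hsub (u n) x)).
  apply Rle_lt_trans with (hnorm (hsub (u n) x) * (hnorm w + 1)). nra.
  apply (Rmult_lt_compat_r (hnorm w + 1)) in HN; [|lra]. field_simplify in HN; lra.
Qed.

Definition HS {K : Hilbert} (w : K) (al : R) := fun x : K => al <= hinner x w.

Lemma HS_closed (K : Hilbert) (w : K) al : closedS (HS w al).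
Proof.
  intros u x Hu Hc. unfold HS in *. apply (cv_ge (fun n => hinner (u n) w)).
  apply inner_cv. apply sq_cv_sqrt. intro; apply hinner_pos. exact Hc.
  exists 0%nat. intros; apply Hu.
Qed.

Lemma HS_convex (K : Hilbert) (w : K) al : convexS (HS w al).
Proof. intros x y t Ht Hx Hy. unfold HS in *. iexp. nra. Qed.

Section FB.
Variable K : Hilbert.
Variable f : K -> ER.
Hypothesis fconv : forall x y t, 0 < t < 1 ->
  ERle (f (hadd (hscal t x) (hscal (1 - t) y))) (ERadd (ERscal t (f x)) (ERscal (1 - t) (f y))).
Hypothesis flsc : forall (r : R) (u : nat -> K) (x : K),
  (forall n, ERle (f (u n)) (Fin r)) -> Un_cv (fun n => hnorm (hsub (u n) x)) 0 -> ERle (f x) (Fin r).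

Definition FS (w : K) (r : R) := fun x : K => exists v, f x = Fin v /\ v + hinner x w <= r.

Lemma FS_closed w r : closedS (FS w r).
Proof.
  intros u x Hu Hc. apply sq_cv_sqrt in Hc; [|intro; apply hinner_pos]. change (Un_cv (fun n => hnorm (hsub (u n) x)) 0) in Hc.
  pose proof (inner_cv _ u x w Hc) as Hi.
  assert (Hd: forall d, d > 0 -> exists v, f x = Fin v /\ v <= r - hinner x w + d).
  { intros d Hd. destruct (cv_eventually_gt _ _ (hinner x w - d) Hi) as [N HN]. lra.
    assert (ERle (f x) (Fin (r - hinner x w + d))).
    { apply (flsc _ (fun k => u (k + N)%nat)).
      - intro k. destruct (Hu (k+N)%nat) as [v [Ev Hv]]. rewrite Ev. simpl. specialize (HN (k+N)%nat ltac:(lia)). lra.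
      - apply (cv_shift (fun n => hnorm (hsub (u n) x))). exact Hc. }
    destruct (f x) as [v|]; simpl in H; [|contradiction]. exists v; auto. }
  destruct (Hd 1 ltac:(lra)) as [v [Ev _]]. exists v. split; auto.
  apply Rnot_lt_le. intro Hlt. destruct (Hd ((v - (r - hinner x w))/2)) as [v' [Ev' Hv']]. lra.
  rewrite Ev in Ev'. injection Ev' as <-. lra.
Qed.

Lemma FS_convex w r : convexS (FS w r).
Proof.
  intros x y t Ht [vx [Ex Hx]] [vy [Ey Hy]].
  destruct (Req_dec t 0) as [->|H0].
  { replace (hadd (hscal 0 x) (hscal (1 - 0) y)) with y. exists vy; auto. apply veq. iexp. ring. }
  destruct (Req_dec t 1) as [->|H1].
  { replace (hadd (hscal 1 x) (hscal (1 - 1) y)) with x. exists vx; auto. apply veq. iexp. ring. }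
  pose proof (fconv x y t ltac:(lra)) as C. rewrite Ex, Ey in C. simpl in C.
  destruct (f (hadd (hscal t x) (hscal (1 - t) y))) as [v|] eqn:Ev; simpl in C; [|contradiction].
  exists v. split; [exact Ev|]. iexp.
  assert (t*(vx + hinner x w) <= t*r) by (apply Rmult_le_compat_l; lra).
  assert ((1-t)*(vy + hinner y w) <= (1-t)*r) by (apply Rmult_le_compat_l; lra).
  lra.
Qed.

Definition is_proxK (g : R) (y p : K) := forall q,
  ERle (ERadd (ERscal g (f p)) (Fin (/ 2 * hnorm (hsub y p) ^ 2)))
       (ERadd (ERscal g (f q)) (Fin (/ 2 * hnorm (hsub y q) ^ 2))).

Lemma prox_char g y p s fs : 0 < g -> is_proxK g y p -> f s = Fin fs ->
  exists vp, f p = Fin vp /\ forall q vq, f q = Fin vq -> g * vp + hinner (hsub q p) (hsub y p) <= g * vq.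
Proof.
  intros gpos Hp Hs.
  destruct (f p) as [vp|] eqn:Ep.
  2: { specialize (Hp s). rewrite Ep, Hs in Hp. simpl in Hp. contradiction. }
  exists vp; split; auto. intros q vq Eq.
  set (X := g * vp + hinner (hsub q p) (hsub y p) - g * vq).
  destruct (Rle_or_lt X 0); [unfold X in H; lra|exfalso].
  set (Nq := hinner (hsub q p) (hsub q p)).
  assert (HNq: 0 <= Nq) by apply hinner_pos.
  set (t := X / (2 * (Nq + X + 1))).
  assert (Ht: t * (2 * (Nq + X + 1)) = X) by (unfold t; field; lra).
  assert (tpos: 0 < t) by (unfold t; apply Rdiv_lt_0_compat; lra).
  assert (t1: t < 1) by nra.
  pose proof (fconv q p t ltac:(lra)) as C. rewrite Eq, Ep in C. simpl in C.
  destruct (f (hadd (hscal t q) (hscal (1 - t) p))) as [v|] eqn:Ev; simpl in C; [|contradiction].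
  specialize (Hp (hadd (hscal t q) (hscal (1 - t) p))). rewrite Ep, Ev in Hp. cbn [ERadd ERscal ERle] in Hp.
  rewrite !hnorm_sq in Hp.
  assert (C2: g * v <= g * (t * vq + (1 - t) * vp)) by (apply Rmult_le_compat_l; lra).
  assert (KEY: t * X <= t * t / 2 * Nq).
  { unfold X, Nq. revert Hp. iexp. intro Hp. iexp. lra. }
  assert (X <= t / 2 * Nq).
  { apply (Rmult_le_reg_l t); auto. lra. }
  nra.
Qed.

Variable B : K -> K.
Variable kappa : R.
Hypothesis kpos : 0 < kappa.
Hypothesis coco : forall x y, kappa * hinner (hsub (B x) (B y)) (hsub (B x) (B y)) <= hinner (hsub x y) (hsub (B x) (B y)).
Variable eps : R.
Variable gam : nat -> R.
Hypothesis epspos : 0 < eps.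
Hypothesis Hgam : forall n, eps <= gam n <= (2 - eps) * kappa.
Variables x a b : nat -> K.
Hypothesis Ha : abs_summable a.
Hypothesis Hb : abs_summable b.
Definition yv n := hsub (x n) (hscal (gam n) (hadd (B (x n)) (a n))).
Definition pv n := hsub (x (S n)) (b n).
Hypothesis Hiter : forall n, is_proxK (gam n) (yv n) (pv n).

Definition Sol s := f s <> PInf /\ forall y, ERle (ERadd (Fin (hinner (hsub y s) (hopp (B s)))) (f s)) (f y).

Lemma Sol_real s : Sol s -> exists fs, f s = Fin fs /\ forall q vq, f q = Fin vq -> hinner (hsub q s) (hopp (B s)) + fs <= vq.
Proof.
  intros [Hf Hy]. destruct (f s) as [fs|] eqn:E; [|congruence]. exists fs; split; auto.
  intros q vq Eq. specialize (Hy q). try rewrite E in Hy. rewrite Eq in Hy. simpl in Hy. exact Hy.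
Qed.

Lemma gpos n : 0 < gam n.
Proof. pose proof (Hgam n). lra. Qed.

Lemma cpos : 0 < (2 - eps) * kappa.
Proof. pose proof (Hgam 0%nat). lra. Qed.

Definition vv s n := hsub (hsub (hsub (x n) s) (hscal (gam n) (hsub (B (x n)) (B s)))) (hscal (gam n) (a n)).
Definition ee s n := hsub (pv n) s.

Lemma step_ineq n s : Sol s -> 0 <= hinner (ee s n) (hsub (vv s n) (ee s n)).
Proof.
  intros Hs. destruct (Sol_real s Hs) as [fs [Es Hsr]].
  destruct (prox_char (gam n) (yv n) (pv n) s fs (gpos n) (Hiter n) Es) as [vp [Ep Hq]].
  pose proof (Hq s fs Es) as A1. pose proof (Hsr (pv n) vp Ep) as A2.
  assert (A3: gam n * (hinner (hsub (pv n) s) (hopp (B s)) + fs) <= gam n * vp)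
    by (apply Rmult_le_compat_l; [pose proof (gpos n); lra | exact A2]).
  unfold yv in A1. unfold vv, ee. set (g := gam n) in *. set (p := pv n) in *.
  revert A1 A3. iexp. intros A1 A3. iexp. lra.
Qed.

Lemma fej n s : Sol s ->
  let d := hsub (x n) s in let Dl := hsub (B (x n)) (B s) in
  hnorm (hsub d (hscal (gam n) Dl)) ^ 2 <= hnorm d ^ 2 - eps * eps * kappa * hinner Dl Dl /\
  hnorm (vv s n) <= hnorm (hsub d (hscal (gam n) Dl)) + (2 - eps) * kappa * hnorm (a n) /\
  hnorm (ee s n) <= hnorm (vv s n) /\
  hnorm (hsub (x (S n)) s) <= hnorm (ee s n) + hnorm (b n) /\
  hinner (hsub (vv s n) (ee s n)) (hsub (vv s n) (ee s n)) <= hnorm (vv s n) ^ 2 - hnorm (ee s n) ^ 2.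
Proof.
  intros Hs d Dl. pose proof (step_ineq n s Hs) as St. pose proof (gpos n) as gp. pose proof (Hgam n) as Hg.
  split; [|split; [|split; [|split]]].
  - rewrite !hnorm_sq. pose proof (coco (x n) s) as Co. fold d Dl in Co. 
    assert (gam n * (kappa * hinner Dl Dl) <= gam n * hinner d Dl) by (apply Rmult_le_compat_l; lra).
    pose proof (hinner_pos Dl).
    assert (eps * (eps * kappa) <= gam n * (2 * kappa - gam n)).
    { apply Rmult_le_compat; nra. }
    assert (eps * (eps * kappa) * hinner Dl Dl <= gam n * (2 * kappa - gam n) * hinner Dl Dl)
      by (apply Rmult_le_compat_r; lra).
    iexp. rewrite (hinner_sym Dl d). lra.
  - unfold vv. fold d Dl. eapply Rle_trans. apply tri_sub. rewrite hnorm_scal.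
    rewrite Rabs_right by lra. pose proof (hnorm_pos _ (a n)). nra.
  - pose proof (hnorm_pos _ (ee s n)). pose proof (hnorm_pos _ (vv s n)).
    pose proof (cs _ (ee s n) (vv s n)).
    assert (hinner (ee s n) (ee s n) <= hinner (ee s n) (vv s n)) by (revert St; iexp; intro; lra).
    rewrite <- hnorm_sq in H2. simpl in H2. nra.
  - replace (hsub (x (S n)) s) with (hadd (ee s n) (b n)). apply tri.
    apply veq. unfold ee, pv. iexp. ring.
  - rewrite !hnorm_sq. revert St. iexp. intro. lra.
Qed.

Definition epsn n := (2 - eps) * kappa * hnorm (a n) + hnorm (b n).

Lemma epsn_facts : (forall n, 0 <= epsn n) /\ (exists E, forall N, sum_f_R0 epsn N <= E) /\ Un_cv epsn 0.
Proof.
  destruct Ha as [A HA]. destruct Hb as [Bb HB]. pose proof cpos.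
  assert (P: forall n, 0 <= epsn n).
  { intro n. unfold epsn. pose proof (hnorm_pos _ (a n)). pose proof (hnorm_pos _ (b n)). nra. }
  assert (S: forall N, sum_f_R0 epsn N <= (2 - eps) * kappa * A + Bb).
  { intro N. unfold epsn. rewrite (sum_f_lin (fun n => hnorm (a n)) (fun n => hnorm (b n))).
    specialize (HA N). specialize (HB N). nra. }
  split; auto. split. eauto. eapply sum_nonneg_cv0; eauto.
Qed.

Lemma r_step s n : Sol s -> hnorm (hsub (x (S n)) s) <= hnorm (hsub (x n) s) + epsn n.
Proof.
  intros Hs. destruct (fej n s Hs) as [F1 [F2 [F3 [F4 _]]]].
  set (D := hnorm (hsub (hsub (x n) s) (hscal (gam n) (hsub (B (x n)) (B s))))) in *.
  assert (D <= hnorm (hsub (x n) s)).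
  { pose proof (hnorm_pos _ (hsub (x n) s)). assert (0 <= D) by apply hnorm_pos.
    pose proof (hinner_pos (hsub (B (x n)) (B s))).
    assert (0 <= eps * eps * kappa * hinner (hsub (B (x n)) (B s)) (hsub (B (x n)) (B s))).
    { apply Rmult_le_pos; auto. pose proof epspos. nra. }
    nra. }
  unfold epsn. lra.
Qed.

Lemma r_cv s : Sol s -> exists l, Un_cv (fun n => hnorm (hsub (x n) s)) l.
Proof.
  intros Hs. destruct epsn_facts as [P [[E HE] _]].
  eapply qfejer; eauto. intro; apply hnorm_pos. intro n. apply r_step; auto.
Qed.
Lemma cv_const (c : R) : Un_cv (fun _ => c) c.
Proof. intros e He. exists 0%nat. intros. unfold R_dist. rewrite Rminus_diag, Rabs_R0. lra. Qed.

Variable z : K.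
Hypothesis Hz : Sol z.

Lemma key_bounds : exists R, 0 <= R /\ (forall n, hnorm (hsub (x n) z) <= R) /\
  Un_cv (fun n => hinner (hsub (B (x n)) (B z)) (hsub (B (x n)) (B z))) 0 /\
  Un_cv (fun n => hinner (hsub (vv z n) (ee z n)) (hsub (vv z n) (ee z n))) 0.
Proof.
  destruct (r_cv z Hz) as [l Hl]. destruct (cv_bounded _ _ Hl) as [R0 HR0].
  assert (R0pos: 0 <= R0) by (specialize (HR0 0%nat); pose proof (Rabs_pos (hnorm (hsub (x 0%nat) z))); lra).
  assert (Hr: forall n, hnorm (hsub (x n) z) <= R0) by (intro n; specialize (HR0 n); pose proof (RRle_abs (hnorm (hsub (x n) z))); lra).
  destruct epsn_facts as [Pe [_ He]].
  set (r := fun n => hnorm (hsub (x n) z)) in *.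
  set (W := fun n => r n * r n - r (S n) * r (S n) + 4 * R0 * epsn n + 2 * (epsn n * epsn n)).
  assert (HW: Un_cv W 0).
  { eapply Un_cv_ext. intro n. unfold W. reflexivity.
    replace 0 with (l*l - l*l + 4*R0*0 + 2*(0*0)) by ring.
    apply CV_plus. apply CV_plus. apply CV_minus. apply CV_mult; auto.
    assert (Hl1: Un_cv (fun n => r (S n)) l).
    { intros e0 He0. destruct (Hl e0 He0) as [N HN]. exists N. intros. apply HN. lia. }
    apply CV_mult; auto. apply CV_mult; auto. apply cv_const. apply CV_mult; auto. apply cv_const. apply CV_mult; auto. }
  exists R0. split; auto. split; auto.
  assert (c0: 0 < eps * eps * kappa) by (pose proof epspos; pose proof kpos; apply Rmult_lt_0_compat; nra).
  assert (pieces: forall n, eps * eps * kappa * hinner (hsub (B (x n)) (B z)) (hsub (B (x n)) (B z)) <= W n /\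
       hinner (hsub (vv z n) (ee z n)) (hsub (vv z n) (ee z n)) <= W n).
  { intro n. destruct (fej n z Hz) as [F1 [F2 [F3 [F4 F5]]]].
    set (D := hnorm (hsub (hsub (x n) z) (hscal (gam n) (hsub (B (x n)) (B z))))) in *.
    fold (r n) in F1. fold (r (S n)) in F4. unfold W.
    assert (0 <= D) by apply hnorm_pos.
    pose proof (hnorm_pos _ (vv z n)). pose proof (hnorm_pos _ (ee z n)). pose proof (hnorm_pos _ (b n)).
    pose proof (hnorm_pos _ (a n)).
    assert (0 <= r n) by apply hnorm_pos. assert (0 <= r (S n)) by apply hnorm_pos.
    assert (r n <= R0) by apply Hr. assert (r (S n) <= R0) by apply Hr. pose proof (Pe n). pose proof cpos.
    pose proof (hinner_pos (hsub (B (x n)) (B z))).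
    assert (Dr: D <= r n).
    { assert (0 <= eps * eps * kappa * hinner (hsub (B (x n)) (B z)) (hsub (B (x n)) (B z))) by (apply Rmult_le_pos; lra).
      nra. }
    assert (r1: r (S n) <= D + epsn n) by (unfold epsn; lra).
    assert (nvb: hnorm (vv z n) <= r n + epsn n) by (unfold epsn in *; nra).
    assert (neb: r (S n) - epsn n <= hnorm (ee z n)) by (unfold epsn in *; nra).
    assert (D * epsn n <= R0 * epsn n) by (apply Rmult_le_compat_r; lra).
    assert (r n * epsn n <= R0 * epsn n) by (apply Rmult_le_compat_r; lra).
    assert (r (S n) * epsn n <= R0 * epsn n) by (apply Rmult_le_compat_r; lra).
    assert (0 <= R0 * epsn n) by (apply Rmult_le_pos; lra).
    assert (0 <= epsn n * epsn n) by (apply Rmult_le_pos; lra).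
    split.
    - simpl in F1. assert (r (S n) * r (S n) <= (D + epsn n) * (D + epsn n)) by (apply Rmult_le_compat; lra).
      lra.
    - simpl in F5. destruct (Rle_or_lt (epsn n) (r (S n))).
      + assert ((r (S n) - epsn n) * (r (S n) - epsn n) <= hnorm (ee z n) * hnorm (ee z n)) by (apply Rmult_le_compat; lra).
        assert (hnorm (vv z n) * hnorm (vv z n) <= (r n + epsn n) * (r n + epsn n)) by (apply Rmult_le_compat; lra).
        lra.
      + assert (hnorm (vv z n) * hnorm (vv z n) <= (r n + epsn n) * (r n + epsn n)) by (apply Rmult_le_compat; lra).
        assert (r (S n) * r (S n) <= epsn n * epsn n) by (apply Rmult_le_compat; lra).
        assert (0 <= hnorm (ee z n) * hnorm (ee z n)) by (apply Rmult_le_pos; lra).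
        lra. }
  split.
  - apply (squeeze0 _ (fun n => / (eps * eps * kappa) * W n)). intro; apply hinner_pos.
    exists 0%nat. intros n _. destruct (pieces n) as [P1 _].
    apply (Rmult_le_reg_l (eps * eps * kappa)); auto. field_simplify; lra.
    replace 0 with (/ (eps * eps * kappa) * 0) by ring. apply CV_mult; auto. apply cv_const.
  - apply (squeeze0 _ W). intro; apply hinner_pos. exists 0%nat. intros n _. apply pieces. exact HW.
Qed.
Lemma a_cv : Un_cv (fun n => hnorm (a n)) 0.
Proof. destruct Ha as [A HA]. eapply sum_nonneg_cv0; eauto. intro; apply hnorm_pos. Qed.

Lemma cv_plus0 (u w : nat -> R) : Un_cv u 0 -> Un_cv w 0 -> Un_cv (fun n => u n + w n) 0.
Proof. intros. replace 0 with (0 + 0) by ring. apply CV_plus; auto. Qed.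

Lemma cv_scal0 (u : nat -> R) c : Un_cv u 0 -> Un_cv (fun n => c * u n) 0.
Proof. intros. replace 0 with (c * 0) by ring. apply CV_mult; auto. apply cv_const. Qed.

Lemma Bn_cv : Un_cv (fun n => hnorm (hsub (B (x n)) (B z))) 0.
Proof.
  destruct key_bounds as [R [_ [_ [H _]]]]. apply sq_cv_sqrt. intro; apply hinner_pos. exact H.
Qed.

Lemma ve_cv : Un_cv (fun n => hnorm (hsub (vv z n) (ee z n))) 0.
Proof.
  destruct key_bounds as [R [_ [_ [_ H]]]]. apply sq_cv_sqrt. intro; apply hinner_pos. exact H.
Qed.

Lemma xp_cv : Un_cv (fun n => hnorm (hsub (x n) (pv n))) 0.
Proof.
  apply (squeeze0 _ (fun n => hnorm (hsub (vv z n) (ee z n)) + ((2 - eps) * kappa * hnorm (hsub (B (x n)) (B z)) + (2 - eps) * kappa * hnorm (a n)))).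
  intro; apply hnorm_pos.
  - exists 0%nat. intros n _.
    replace (hsub (x n) (pv n)) with (hadd (hadd (hsub (vv z n) (ee z n)) (hscal (gam n) (hsub (B (x n)) (B z)))) (hscal (gam n) (a n))).
    2: { apply veq. unfold vv, ee, pv. iexp. ring. }
    eapply Rle_trans. apply tri. eapply Rle_trans. apply Rplus_le_compat_r. apply tri.
    rewrite !hnorm_scal. rewrite Rabs_right by (pose proof (gpos n); lra).
    pose proof (Hgam n). pose proof (hnorm_pos _ (a n)). pose proof (hnorm_pos _ (hsub (B (x n)) (B z))).
    assert (gam n * hnorm (hsub (B (x n)) (B z)) <= (2 - eps) * kappa * hnorm (hsub (B (x n)) (B z))) by (apply Rmult_le_compat_r; lra).
    assert (gam n * hnorm (a n) <= (2 - eps) * kappa * hnorm (a n)) by (apply Rmult_le_compat_r; lra).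
    lra.
  - apply cv_plus0. apply ve_cv. apply cv_plus0; apply cv_scal0. apply Bn_cv. apply a_cv.
Qed.

Lemma cv_abs_bound (u : nat -> R) l : Un_cv u l -> exists R, 0 <= R /\ forall n, u n <= R.
Proof.
  intros H. destruct (cv_bounded _ _ H) as [R HR]. exists (Rabs R). split. apply Rabs_pos.
  intro n. specialize (HR n). pose proof (RRle_abs (u n)). pose proof (RRle_abs R). lra.
Qed.

Lemma bounds : exists X P, 0 <= X /\ 0 <= P /\ (forall n, hnorm (x n) <= X) /\ (forall n, hnorm (pv n) <= P).
Proof.
  destruct key_bounds as [R [R0 [Hr _]]].
  destruct (cv_abs_bound _ _ xp_cv) as [Q [Q0 HQ]].
  exists (R + hnorm z), (Q + R + hnorm z). pose proof (hnorm_pos _ z).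
  assert (Hx: forall n, hnorm (x n) <= R + hnorm z).
  { intro n. replace (x n) with (hadd (hsub (x n) z) z) by (apply veq; iexp; ring).
    eapply Rle_trans. apply tri. specialize (Hr n). lra. }
  split; [lra|]. split; [lra|]. split; auto.
  intro n. replace (pv n) with (hsub (x n) (hsub (x n) (pv n))) by (apply veq; iexp; ring).
  eapply Rle_trans. apply tri_sub. specialize (Hx n). specialize (HQ n). lra.
Qed.

Lemma cv_prod0 (u w : nat -> R) R : (forall n, 0 <= u n <= R) -> Un_cv w 0 -> Un_cv (fun n => u n * w n) 0.
Proof. intros Hu Hw. apply (cv_bnd_mult _ _ R); auto. intro n. specialize (Hu n). rewrite Rabs_right; lra. Qed.
Lemma abs_both u M : Rabs u <= M -> - M <= u /\ u <= M.
Proof. unfold Rabs; destruct Rcase_abs; lra. Qed.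

Lemma cl_sol (sg : nat -> nat) (Hsg : forall k, (sg k >= k)%nat) c
  (Hc : forall C, closedS C -> convexS C -> (exists N, forall k, (k >= N)%nat -> C (pv (sg k))) -> C c) :
  Sol c /\ B c = B z.
Proof.
  destruct bounds as [X [P [X0 [P0 [HX HP]]]]].
  assert (Hc': forall C, closedS C -> convexS C -> (exists N, forall n, (n >= N)%nat -> C (pv n)) -> C c).
  { intros C Cc Cv [N HN]. apply Hc; auto. exists N. intros k Hk. apply HN. specialize (Hsg k). lia. }
  set (Dc := hsub (B z) (B c)).
  assert (Eerr: Un_cv (fun n => 2 * kappa * hnorm Dc * hnorm (hsub (B (x n)) (B z)) + (X + hnorm c) * hnorm (hsub (B (x n)) (B z)) + hnorm Dc * hnorm (hsub (x n) (pv n))) 0).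
  { apply cv_plus0. apply cv_plus0. apply cv_scal0, Bn_cv. apply cv_scal0, Bn_cv. apply cv_scal0, xp_cv. }
  assert (al_le: kappa * hinner Dc Dc <= 0).
  { apply Rnot_lt_le. intro Hpos.
    set (d := kappa * hinner Dc Dc / 2).
    destruct (cv_eventually_lt _ _ d Eerr) as [N HN]. unfold d; lra.
    assert (HSc: HS Dc (kappa * hinner Dc Dc - d + hinner c Dc) c).
    { apply (Hc' (HS Dc (kappa * hinner Dc Dc - d + hinner c Dc))). apply HS_closed. apply HS_convex. exists N. intros n Hn. specialize (HN n Hn). unfold HS.
      set (Dl := hsub (B (x n)) (B z)) in *.
      pose proof (coco (x n) c) as Co.
      pose proof (abs_both _ _ (cs_abs _ Dl Dc)) as C1.
      pose proof (abs_both _ _ (cs_abs _ (hsub (x n) c) Dl)) as C2.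
      pose proof (abs_both _ _ (cs_abs _ (hsub (x n) (pv n)) Dc)) as C3.
      assert (hnorm (hsub (x n) c) <= X + hnorm c) by (eapply Rle_trans; [apply tri_sub| specialize (HX n); lra]).
      assert (hnorm (hsub (x n) c) * hnorm Dl <= (X + hnorm c) * hnorm Dl) by (apply Rmult_le_compat_r; auto; apply hnorm_pos).
      assert (I1: hinner (pv n) Dc - hinner c Dc = hinner (hsub (x n) c) (hsub (B (x n)) (B c)) - hinner (hsub (x n) c) Dl - hinner (hsub (x n) (pv n)) Dc)
        by (unfold Dc, Dl; iexp; ring).
      assert (I2: hinner (hsub (B (x n)) (B c)) (hsub (B (x n)) (B c)) = hinner Dl Dl + 2 * hinner Dl Dc + hinner Dc Dc)
        by (unfold Dc, Dl; iexp; ring).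
      pose proof (hinner_pos Dl).
      assert (kappa * hinner Dl Dc <= kappa * (hnorm Dl * hnorm Dc)) by (apply Rmult_le_compat_l; lra).
      assert (kappa * (- (hnorm Dl * hnorm Dc)) <= kappa * hinner Dl Dc) by (apply Rmult_le_compat_l; lra).
      assert (0 <= kappa * hinner Dl Dl) by (apply Rmult_le_pos; lra).
      rewrite I2 in Co. lra. }
    unfold HS in HSc. unfold d in HSc. lra. }
  assert (BcBz: B c = B z).
  { symmetry. apply veq. fold Dc. pose proof (hinner_pos Dc).
    assert (0 <= kappa * hinner Dc Dc) by (apply Rmult_le_pos; lra).
    assert (E0: kappa * hinner Dc Dc = 0) by lra. apply Rmult_integral in E0. destruct E0; lra. }
  destruct (Sol_real z Hz) as [fz [Ez Hzr]].
  assert (Fq: forall q vq, f q = Fin vq -> forall dl, dl > 0 -> exists fc, f c = Fin fc /\ fc + hinner c (B z) <= vq + hinner q (B z) + dl).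
  { intros q vq Eq dl Hdl.
    assert (Eerr2: Un_cv (fun n => / eps * (hnorm q + P) * hnorm (hsub (vv z n) (ee z n))) 0) by (apply cv_scal0, ve_cv).
    destruct (cv_eventually_lt _ _ dl Eerr2 Hdl) as [N HN].
    assert (FSc: FS (B z) (vq + hinner q (B z) + dl) c).
    { apply (Hc' (FS (B z) (vq + hinner q (B z) + dl))). apply FS_closed. apply FS_convex. exists N. intros n Hn. specialize (HN n Hn).
      destruct (prox_char (gam n) (yv n) (pv n) z fz (gpos n) (Hiter n) Ez) as [vp [Ep Hq]].
      exists vp. split; auto. specialize (Hq q vq Eq).
      assert (I: hinner (hsub q (pv n)) (hsub (yv n) (pv n)) = hinner (hsub q (pv n)) (hsub (vv z n) (ee z n)) - gam n * (hinner q (B z) - hinner (pv n) (B z)))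
        by (unfold yv, vv, ee; iexp; ring).
      pose proof (abs_both _ _ (cs_abs _ (hsub q (pv n)) (hsub (vv z n) (ee z n)))) as C1.
      assert (hnorm (hsub q (pv n)) <= hnorm q + P) by (eapply Rle_trans; [apply tri_sub| specialize (HP n); lra]).
      assert (hnorm (hsub q (pv n)) * hnorm (hsub (vv z n) (ee z n)) <= (hnorm q + P) * hnorm (hsub (vv z n) (ee z n)))
        by (apply Rmult_le_compat_r; auto; apply hnorm_pos).
      set (t := vp + hinner (pv n) (B z) - (vq + hinner q (B z))).
      assert (gam n * t <= (hnorm q + P) * hnorm (hsub (vv z n) (ee z n))) by (unfold t; rewrite I in Hq; lra).
      destruct (Rle_or_lt t 0). unfold t in *; lra.
      assert (eps * t <= gam n * t) by (apply Rmult_le_compat_r; [lra| apply Hgam]).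
      assert (t <= / eps * (hnorm q + P) * hnorm (hsub (vv z n) (ee z n))).
      { apply (Rmult_le_reg_l eps); auto. field_simplify; lra. }
      unfold t in *. lra. }
    destruct FSc as [fc [Ec Hfc]]. exists fc. split; auto. }
  destruct (Fq z fz Ez 1 ltac:(lra)) as [fc [Ec _]].
  assert (Fq2: forall q vq, f q = Fin vq -> fc + hinner c (B z) <= vq + hinner q (B z)).
  { intros q vq Eq. apply Rnot_lt_le. intro Hlt.
    destruct (Fq q vq Eq ((fc + hinner c (B z) - (vq + hinner q (B z)))/2)) as [fc' [Ec' H']]. lra.
    rewrite Ec in Ec'. injection Ec' as <-. lra. }
  split; [|exact BcBz].
  split. rewrite Ec; discriminate.
  intro y. destruct (f y) as [vy|] eqn:Ey; [|rewrite Ec; simpl; auto].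
  rewrite Ec. simpl. rewrite BcBz. specialize (Fq2 y vy Ey). iexp. lra.
Qed.
Lemma hnorm_mul_self (u : K) : hnorm u * hnorm u = hinner u u.
Proof. unfold hnorm. apply sqrt_sqrt, hinner_pos. Qed.

Lemma inner_null (u : nat -> K) w : Un_cv (fun n => hnorm (u n)) 0 -> Un_cv (fun n => hinner (u n) w) 0.
Proof.
  intros H. rewrite <- (hinner_0l _ w). apply inner_cv.
  eapply Un_cv_ext. 2: exact H. intro n. simpl. f_equal. apply veq. iexp. ring.
Qed.

Lemma kappa_lim s1 s2 : Sol s1 -> Sol s2 -> exists k0, Un_cv (fun n => hinner (x n) (hsub s1 s2)) k0.
Proof.
  intros S1 S2. destruct (r_cv s1 S1) as [l1 H1]. destruct (r_cv s2 S2) as [l2 H2].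
  exists (/2 * (l2 * l2 - l1 * l1 + hinner s1 s1 - hinner s2 s2)).
  eapply Un_cv_ext.
  2: { apply CV_mult. apply cv_const. apply CV_minus. apply CV_plus. apply CV_minus.
       apply CV_mult; exact H2. apply CV_mult; exact H1. apply cv_const. apply cv_const. }
  intro n. simpl. rewrite !hnorm_mul_self. iexp. lra.
Qed.

Lemma cluster_inner (sg : nat -> nat) (Hsg : forall k, (sg k >= k)%nat) c
  (Hc : forall C, closedS C -> convexS C -> (exists N, forall k, (k >= N)%nat -> C (pv (sg k))) -> C c)
  w k0 : Un_cv (fun n => hinner (x n) w) k0 -> hinner c w = k0.
Proof.
  intros Hk.
  assert (Hp: Un_cv (fun n => hinner (pv n) w) k0).
  { replace k0 with (k0 - 0) by ring. eapply Un_cv_ext.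
    2: { apply CV_minus. exact Hk. apply (inner_null (fun n => hsub (x n) (pv n)) w). apply xp_cv. }
    intro n. simpl. iexp. ring. }
  apply (cv_sub _ _ sg Hsg) in Hp.
  assert (B1: forall dl, dl > 0 -> k0 - dl <= hinner c w).
  { intros dl Hdl. apply (Hc (HS w (k0 - dl))). apply HS_closed. apply HS_convex.
    destruct (cv_eventually_gt _ _ (k0 - dl) Hp) as [N HN]. lra. exists N. intros k Hk'. unfold HS. specialize (HN k Hk'). lra. }
  assert (B2: forall dl, dl > 0 -> hinner c w <= k0 + dl).
  { intros dl Hdl. assert (HS (hopp w) (- (k0 + dl)) c).
    { apply (Hc (HS (hopp w) (- (k0 + dl)))). apply HS_closed. apply HS_convex.
      destruct (cv_eventually_lt _ _ (k0 + dl) Hp) as [N HN]. lra. exists N. intros k Hk'. unfold HS.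
      rewrite hinner_opp_r. specialize (HN k Hk'). lra. }
    unfold HS in H. rewrite hinner_opp_r in H. lra. }
  destruct (Rtotal_order (hinner c w) k0) as [Hl|[He|Hg]]; auto.
  - specialize (B1 ((k0 - hinner c w)/2) ltac:(lra)). lra.
  - specialize (B2 ((hinner c w - k0)/2) ltac:(lra)). lra.
Qed.

Theorem FB_main : exists c, Sol c /\ weak_cv x c /\
  Un_cv (fun n => hinner (hsub (B (x n)) (B c)) (hsub (B (x n)) (B c))) 0.
Proof.
  destruct bounds as [X [P [X0 [P0 [HX HP]]]]].
  assert (Pb: forall n, hinner (pv n) (pv n) <= P * P) by (intro; apply hnorm_sq_le; auto).
  destruct (ccp K pv (P * P) Pb) as [c0 Hc0].
  destruct (cl_sol (fun k => k) (fun k => le_n k) c0 Hc0) as [S0 B0].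
  exists c0. split; auto. split.
  2: { rewrite B0. destruct key_bounds as [_ [_ [_ [H _]]]]. exact H. }
  intro v. apply NNPP. intro Hnot.
  assert (Hinf: exists dl, dl > 0 /\ forall N, exists n, (n >= N)%nat /\ dl <= Rabs (hinner (x n) v - hinner c0 v)).
  { apply NNPP. intro H. apply Hnot. intros e He. apply NNPP. intro H2. apply H. exists e. split; auto.
    intro N. apply NNPP. intro H3. apply H2. exists N. intros n Hn. unfold R_dist. apply Rnot_le_lt.
    intro H4. apply H3. exists n. split; auto. }
  destruct Hinf as [dl [Hdl Hinf]].
  assert (Hsign: exists v', forall N, exists n, (n >= N)%nat /\ dl <= hinner (x n) v' - hinner c0 v').
  { destruct (classic (forall N, exists n, (n >= N)%nat /\ dl <= hinner (x n) v - hinner c0 v)) as [Hp|Hn].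
    - exists v; auto.
    - exists (hopp v). apply not_all_ex_not in Hn. destruct Hn as [N1 HN1].
      intro N. destruct (Hinf (N + N1)%nat) as [n [Hn Habs]]. exists n. split. lia.
      rewrite !hinner_opp_r.
      assert (~ dl <= hinner (x n) v - hinner c0 v) by (intro; apply HN1; exists n; split; [lia|auto]).
      revert Habs H. unfold Rabs; destruct Rcase_abs; intros; lra. }
  destruct Hsign as [v' Hv'].
  set (sg := fun k => proj1_sig (constructive_indefinite_description _ (Hv' k))).
  assert (Hsg: forall k, (sg k >= k)%nat /\ dl <= hinner (x (sg k)) v' - hinner c0 v')
    by (intro k; exact (proj2_sig (constructive_indefinite_description _ (Hv' k)))).
  destruct (ccp K (fun k => pv (sg k)) (P * P) (fun k => Pb (sg k))) as [c1 Hc1].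
  destruct (cl_sol sg (fun k => proj1 (Hsg k)) c1 Hc1) as [S1 _].
  destruct (kappa_lim c1 c0 S1 S0) as [k0 Hk0].
  pose proof (cluster_inner sg (fun k => proj1 (Hsg k)) c1 Hc1 _ _ Hk0) as E1.
  pose proof (cluster_inner (fun k => k) (fun k => le_n k) c0 Hc0 _ _ Hk0) as E0.
  assert (c1 = c0).
  { apply veq. rewrite hinner_sub_l, E1, E0. ring. }
  assert (HSc1: HS v' (dl / 2 + hinner c0 v') c1).
  { apply (Hc1 (HS v' (dl / 2 + hinner c0 v'))). apply HS_closed. apply HS_convex.
    pose proof (cv_sub _ _ sg (fun k => proj1 (Hsg k)) (inner_null (fun n => hsub (x n) (pv n)) v' xp_cv)) as Hs.
    destruct (cv_eventually_lt _ _ (dl/2) Hs) as [N HN]. lra.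
    exists N. intros k Hk. unfold HS. specialize (HN k Hk). destruct (Hsg k) as [_ Hk2].
    simpl in HN. rewrite hinner_sub_l in HN. lra. }
  subst c1. unfold HS in HSc1. lra.
Qed.
End FB.
Definition lsum (l : list nat) (F : nat -> R) := fold_right Rplus 0 (map F l).

Lemma lsum_plus l F G : lsum l (fun k => F k + G k) = lsum l F + lsum l G.
Proof. induction l; unfold lsum in *; simpl; [ring|]. rewrite IHl. ring. Qed.
Lemma lsum_scal l F c : lsum l (fun k => c * F k) = c * lsum l F.
Proof. induction l; unfold lsum in *; simpl; [ring|]. rewrite IHl. ring. Qed.
Lemma lsum_le l F G : (forall k, F k <= G k) -> lsum l F <= lsum l G.
Proof. intros H. induction l; unfold lsum in *; simpl; [lra|]. specialize (H a). lra. Qed.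
Lemma lsum_ext_in l F G : (forall k, In k l -> F k = G k) -> lsum l F = lsum l G.
Proof. intros H. unfold lsum. f_equal. apply map_ext_in. auto. Qed.
Lemma lsum_zero_notin l F k0 : ~ In k0 l -> (forall k, k <> k0 -> F k = 0) -> lsum l F = 0.
Proof.
  intros Hn H. induction l; unfold lsum in *; simpl; [ring|].
  rewrite H. rewrite IHl. ring. intro; apply Hn; simpl; auto. intro; subst; apply Hn; simpl; auto.
Qed.
Lemma lsum_single l F k0 : In k0 l -> NoDup l -> (forall k, k <> k0 -> F k = 0) -> lsum l F = F k0.
Proof.
  intros Hi Hd H. induction l as [|a l IH]; [destruct Hi|]. inversion Hd; subst.
  unfold lsum; simpl. fold (lsum l F). destruct (Nat.eq_dec a k0).
  - subst. rewrite (lsum_zero_notin l F k0); auto. ring.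
  - rewrite H by auto. destruct Hi; [congruence|]. rewrite IH; auto. ring.
Qed.
Lemma lsum_cv l (F : nat -> nat -> R) : (forall k, Un_cv (fun n => F n k) 0) -> Un_cv (fun n => lsum l (F n)) 0.
Proof.
  intros H. induction l; unfold lsum in *; simpl. apply cv_const. apply cv_plus0; auto.
Qed.
Lemma lsum_sqrt l F : (forall k, 0 <= F k) -> sqrt (lsum l F) <= lsum l (fun k => sqrt (F k)).
Proof.
  intros P. induction l; unfold lsum in *; simpl. rewrite sqrt_0; lra.
  assert (0 <= fold_right Rplus 0 (map F l)).
  { clear IHl. induction l; simpl. lra. specialize (P a0). lra. }
  eapply Rle_trans. 2: apply Rplus_le_compat_l; exact IHl.
  specialize (P a).
  apply Rsqr_incr_0_var. unfold Rsqr. rewrite sqrt_sqrt by lra.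
  pose proof (sqrt_sqrt (F a) P). pose proof (sqrt_sqrt _ H). pose proof (sqrt_pos (F a)).
  pose proof (sqrt_pos (fold_right Rplus 0 (map F l))). nra.
  pose proof (sqrt_pos (F a)). pose proof (sqrt_pos (fold_right Rplus 0 (map F l))). lra.
Qed.
Lemma lsum_sum_f l (F : nat -> nat -> R) N : sum_f_R0 (fun n => lsum l (F n)) N = lsum l (fun k => sum_f_R0 (fun n => F n k) N).
Proof.
  induction N; simpl. reflexivity. rewrite IHN. rewrite <- lsum_plus. reflexivity.
Qed.
Lemma fold_max_ge l x0 : In x0 l -> x0 <= fold_right Rmax 0 l.
Proof. induction l; simpl; intros H; [destruct H|]. destruct H. subst. apply Rmax_l. eapply Rle_trans. apply IHl; auto. apply Rmax_r. Qed.

Lemma lsum_cyc n F : lsum (seq 0 (S n)) (fun k => if Nat.eq_dec k n then F 0%nat else F (S k)) = lsum (seq 0 (S n)) F.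
Proof.
  change (lsum (seq 0 (S n)) F) with (F 0%nat + lsum (seq 1 n) F).
  rewrite seq_S. unfold lsum. rewrite map_app, fold_right_app. simpl. destruct (Nat.eq_dec n n); [|congruence].
  rewrite (map_ext_in _ (fun k => F (S k))).
  2: { intros k Hk. apply in_seq in Hk. destruct Nat.eq_dec; [lia|auto]. }
  rewrite <- seq_shift, map_map.
  generalize (seq 0 n). induction l; simpl. ring. rewrite IHl. ring.
Qed.

Section SumIdx.
Variable m : nat.
Implicit Types g : Idx m -> R.
Definition gext (g : Idx m -> R) (k : nat) : R :=
  match lt_dec k m with left p => g (exist _ k p) | right _ => 0 end.
Lemma sumIdx_lsum g : sumIdx g = lsum (seq 0 m) (gext g).
Proof. reflexivity. Qed.
Lemma Idx_pi k (p1 p2 : (k < m)%nat) : (exist (fun i => (i < m)%nat) k p1 : Idx m) = exist _ k p2.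
Proof. unfold Idx. f_equal. apply Peano_dec.le_unique. Qed.
Lemma gext_val g (i : Idx m) : gext g (proj1_sig i) = g i.
Proof. destruct i as [k p]. unfold gext. simpl. destruct (lt_dec k m). rewrite (Idx_pi k l p). auto. contradiction. Qed.

Lemma sumIdx_plus (g1 g2 : Idx m -> R) : sumIdx (fun i => g1 i + g2 i) = sumIdx g1 + sumIdx g2.
Proof. rewrite !sumIdx_lsum, <- lsum_plus. apply lsum_ext_in. intros k _. unfold gext. destruct lt_dec; ring. Qed.
Lemma sumIdx_scal g c : sumIdx (fun i => c * g i) = c * sumIdx g.
Proof. rewrite !sumIdx_lsum, <- lsum_scal. apply lsum_ext_in. intros k _. unfold gext. destruct lt_dec; ring. Qed.
Lemma sumIdx_le (g1 g2 : Idx m -> R) : (forall i, g1 i <= g2 i) -> sumIdx g1 <= sumIdx g2.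
Proof. intros H. rewrite !sumIdx_lsum. apply lsum_le. intro k. unfold gext. destruct lt_dec; auto. lra. Qed.
Lemma sumIdx_ext (g1 g2 : Idx m -> R) : (forall i, g1 i = g2 i) -> sumIdx g1 = sumIdx g2.
Proof. intros H. f_equal. apply functional_extensionality. auto. Qed.
Lemma sumIdx_single g i : (forall j, j <> i -> g j = 0) -> sumIdx g = g i.
Proof.
  intros H. rewrite sumIdx_lsum. rewrite (lsum_single _ _ (proj1_sig i)).
  apply gext_val. apply in_seq. destruct i; simpl; lia. apply seq_NoDup.
  intros k Hk. unfold gext. destruct lt_dec; auto. apply H. intro E. apply Hk. rewrite <- E. reflexivity.
Qed.
Lemma sumIdx_nonneg g : (forall i, 0 <= g i) -> 0 <= sumIdx g.
Proof. intros H. assert (E: sumIdx (fun i => 0 * g i) = 0) by (rewrite sumIdx_scal; ring).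
  rewrite <- E. apply sumIdx_le. intro i. specialize (H i). lra. Qed.
Lemma sumIdx_ge_term g i : (forall j, 0 <= g j) -> g i <= sumIdx g.
Proof.
  intros H. apply Rle_trans with (sumIdx (fun j => if Idx_eq_dec i j then g j else 0)).
  - rewrite (sumIdx_single _ i). destruct (Idx_eq_dec i i); [lra|congruence].
    intros j Hj. destruct Idx_eq_dec; auto. congruence.
  - apply sumIdx_le. intro j. destruct Idx_eq_dec; auto. lra.
Qed.
Lemma sumIdx_cv (g : nat -> Idx m -> R) : (forall i, Un_cv (fun n => g n i) 0) -> Un_cv (fun n => sumIdx (g n)) 0.
Proof.
  intros H. apply (lsum_cv _ (fun n => gext (g n))). intro k. unfold gext. destruct lt_dec. apply H. apply cv_const.
Qed.
Lemma sumIdx_sqrt g : (forall i, 0 <= g i) -> sqrt (sumIdx g) <= sumIdx (fun i => sqrt (g i)).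
Proof.
  intros P. rewrite !sumIdx_lsum. eapply Rle_trans. apply lsum_sqrt. intro k; unfold gext; destruct lt_dec; auto; lra.
  apply lsum_le. intro k. unfold gext. destruct lt_dec; [lra | rewrite sqrt_0; lra].
Qed.
Lemma sumIdx_sum_f (g : nat -> Idx m -> R) N : sum_f_R0 (fun n => sumIdx (g n)) N = sumIdx (fun i => sum_f_R0 (fun n => g n i) N).
Proof.
  rewrite sumIdx_lsum. rewrite <- (lsum_ext_in _ (fun k => sum_f_R0 (fun n => gext (g n) k) N)).
  apply (lsum_sum_f _ (fun n => gext (g n))).
  intros k _. unfold gext. destruct lt_dec; auto. clear. induction N; simpl; auto. rewrite IHN; ring.
Qed.
Lemma sumIdx_cyc g : (1 <= m)%nat -> sumIdx (fun i => g (next i)) = sumIdx g.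
Proof.
  intros Hm. rewrite !sumIdx_lsum.
  rewrite (lsum_ext_in _ _ (fun k => gext g (S k mod m))).
  2: { intros k Hk. apply in_seq in Hk. unfold gext. destruct (lt_dec k m); [|lia].
       destruct (lt_dec (S k mod m) m). f_equal. unfold next. simpl. apply Idx_pi.
       exfalso. apply n. apply Nat.mod_upper_bound. lia. }
  rewrite (lsum_ext_in _ _ (fun k => if Nat.eq_dec k (m-1) then gext g 0 else gext g (S k))).
  2: { intros k Hk. apply in_seq in Hk. destruct Nat.eq_dec. subst k. replace (S (m-1)) with m by lia.
       rewrite Nat.Div0.mod_same. auto. rewrite Nat.mod_small by lia. auto. }
  replace (seq 0 m) with (seq 0 (S (m-1))) by (f_equal; lia).
  apply (lsum_cyc (m-1) (gext g)).
Qed.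
Lemma maxIdx_ge g i : g i <= maxIdx g.
Proof.
  unfold maxIdx. rewrite <- (gext_val g i). apply fold_max_ge. apply in_map. apply in_seq. destruct i; simpl; lia.
Qed.
End SumIdx.
Section ProdH.
Variable m : nat.
Variable H : Idx m -> Hilbert.

Lemma pr_assoc (x y z : Prod H) : padd x (padd y z) = padd (padd x y) z.
Proof. apply functional_extensionality_dep. intro i. apply hadd_assoc. Qed.
Lemma pr_comm (x y : Prod H) : padd x y = padd y x.
Proof. apply functional_extensionality_dep. intro i. apply hadd_comm. Qed.
Lemma pr_0 (x : Prod H) : padd (fun i => hzero) x = x.
Proof. apply functional_extensionality_dep. intro i. apply hadd_0. Qed.
Lemma pr_opp (x : Prod H) : padd x (fun i => hopp (x i)) = (fun i => hzero).
Proof. apply functional_extensionality_dep. intro i. apply hadd_opp. Qed.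
Lemma pr_sassoc a b (x : Prod H) : pscal a (pscal b x) = pscal (a * b) x.
Proof. apply functional_extensionality_dep. intro i. apply hscal_assoc. Qed.
Lemma pr_s1 (x : Prod H) : pscal 1 x = x.
Proof. apply functional_extensionality_dep. intro i. apply hscal_1. Qed.
Lemma pr_dv a (x y : Prod H) : pscal a (padd x y) = padd (pscal a x) (pscal a y).
Proof. apply functional_extensionality_dep. intro i. apply hscal_distr_v. Qed.
Lemma pr_ds a b (x : Prod H) : pscal (a + b) x = padd (pscal a x) (pscal b x).
Proof. apply functional_extensionality_dep. intro i. apply hscal_distr_s. Qed.
Lemma pr_isym (x y : Prod H) : pinner x y = pinner y x.
Proof. unfold pinner. apply sumIdx_ext. intro; apply hinner_sym. Qed.
Lemma pr_iadd (x y z : Prod H) : pinner (padd x y) z = pinner x z + pinner y z.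
Proof. unfold pinner. rewrite <- sumIdx_plus. apply sumIdx_ext. intro; apply hinner_add_l. Qed.
Lemma pr_iscal a (x y : Prod H) : pinner (pscal a x) y = a * pinner x y.
Proof. unfold pinner. rewrite <- sumIdx_scal. apply sumIdx_ext. intro; apply hinner_scal_l. Qed.
Lemma pr_ipos (x : Prod H) : 0 <= pinner x x.
Proof. unfold pinner. apply sumIdx_nonneg. intro; apply hinner_pos. Qed.
Lemma pr_comp_le (x : Prod H) i : hinner (x i) (x i) <= pinner x x.
Proof. unfold pinner. apply (sumIdx_ge_term _ (fun j => hinner (x j) (x j))). intro; apply hinner_pos. Qed.
Lemma pr_idef (x : Prod H) : pinner x x = 0 -> x = (fun i => hzero).
Proof.
  intros E. apply functional_extensionality_dep. intro i. apply hinner_def.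
  pose proof (pr_comp_le x i). pose proof (hinner_pos (x i)). lra.
Qed.
Lemma pr_complete (u : nat -> Prod H) :
  (forall eps, eps > 0 -> exists N, forall p q, (p >= N)%nat -> (q >= N)%nat ->
     sqrt (pinner (padd (u p) (fun i => hopp (u q i))) (padd (u p) (fun i => hopp (u q i)))) < eps) ->
  exists l : Prod H, Un_cv (fun n => sqrt (pinner (padd (u n) (fun i => hopp (l i))) (padd (u n) (fun i => hopp (l i))))) 0.
Proof.
  intros Hc.
  assert (Hi: forall i, exists li, Un_cv (fun n => sqrt (hinner (hadd (u n i) (hopp li)) (hadd (u n i) (hopp li)))) 0).
  { intro i. apply hcomplete. intros e He. destruct (Hc e He) as [N HN]. exists N. intros p q Hp Hq.
    eapply Rle_lt_trans. 2: apply (HN p q Hp Hq). apply sqrt_le_1_alt.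
    apply (pr_comp_le (padd (u p) (fun i => hopp (u q i))) i). }
  exists (fun i => proj1_sig (constructive_indefinite_description _ (Hi i))).
  apply sq_cv_sqrt. intro; apply pr_ipos.
  unfold pinner. apply (sumIdx_cv _ (fun n i => hinner (hadd (u n i) (hopp (proj1_sig (constructive_indefinite_description _ (Hi i))))) (hadd (u n i) (hopp (proj1_sig (constructive_indefinite_description _ (Hi i))))))).
  intro i. apply sqrt_cv_sq. intro; apply hinner_pos.
  exact (proj2_sig (constructive_indefinite_description _ (Hi i))).
Qed.

Definition PH : Hilbert :=
  @mkHilbert (Prod H) (fun i => hzero) (@padd m H) (fun x i => hopp (x i)) (@pscal m H) (@pinner m H)
    pr_assoc pr_comm pr_0 pr_opp pr_sassoc pr_s1 pr_dv pr_ds pr_isym pr_iadd pr_iscal pr_ipos pr_idef pr_complete.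

Definition single (i : Idx m) (v : H i) : Prod H := upd (fun j => hzero) i v.

Lemma upd_same (xb : Prod H) i (v : H i) : upd xb i v i = v.
Proof. unfold upd. destruct (Idx_eq_dec i i) as [e|n]; [|congruence].
  rewrite (UIP_dec Idx_eq_dec e eq_refl). reflexivity. Qed.
Lemma upd_other (xb : Prod H) i (v : H i) j : i <> j -> upd xb i v j = xb j.
Proof. intros Hn. unfold upd. destruct (Idx_eq_dec i j); [congruence|auto]. Qed.

Lemma pinner_single (X : Prod H) i (v : H i) : pinner X (single i v) = hinner (X i) v.
Proof.
  unfold pinner. rewrite (sumIdx_single _ _ i). unfold single. rewrite upd_same. auto.
  intros j Hj. unfold single. rewrite upd_other by auto. apply hinner_0r.
Qed.
End ProdH.
Section Ops.
Variables (H1 G1 : Hilbert) (L : H1 -> G1) (Ls : G1 -> H1) (c : R).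
Hypothesis HL : is_bounded_linear L.
Hypothesis HLs : is_adjoint L Ls.
Hypothesis Hc : is_opnorm L c.

Lemma hopp_scal {K : Hilbert} (v : K) : hopp v = hscal (-1) v.
Proof. apply veq. iexp. ring. Qed.

Lemma L_sub u v : L (hsub u v) = hsub (L u) (L v).
Proof.
  destruct HL as [[Ha Hs] _]. unfold hsub. rewrite Ha, !hopp_scal, Hs. reflexivity.
Qed.
Lemma L_zero : L hzero = hzero.
Proof.
  destruct HL as [[Ha Hs] _]. rewrite <- (hscal_0 _ hzero), Hs, hscal_0. reflexivity.
Qed.
Lemma Ls_eq w e' : (forall v, hinner (L v) w = hinner v e') -> Ls w = e'.
Proof.
  intros H. apply veq. rewrite hinner_sub_r.
  rewrite <- HLs, H. ring.
Qed.
Lemma Ls_sub w1 w2 : Ls (hsub w1 w2) = hsub (Ls w1) (Ls w2).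
Proof. apply Ls_eq. intro v. rewrite !hinner_sub_r, !HLs. reflexivity. Qed.
Lemma Ls_opp_sub w1 w2 : Ls (hsub w1 w2) = hopp (Ls (hsub w2 w1)).
Proof. rewrite !Ls_sub. apply veq. iexp. ring. Qed.

Lemma c_nonneg : 0 <= c.
Proof.
  destruct Hc as [Hub _]. apply Rle_trans with (hnorm (L hzero)). apply hnorm_pos.
  apply Hub. exists hzero. split; auto. unfold hnorm. rewrite hinner_0l, sqrt_0. lra.
Qed.

Lemma L_bound u : hinner (L u) (L u) <= c ^ 2 * hinner u u.
Proof.
  destruct (Req_dec (hinner u u) 0) as [E|E].
  - apply hinner_def in E. subst u. rewrite L_zero, !hinner_0l. lra.
  - destruct HL as [[Ha Hs] _]. destruct Hc as [Hub _].
    set (s := hnorm u). assert (spos: 0 < s).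
    { unfold s, hnorm. apply sqrt_lt_R0. pose proof (hinner_pos u). lra. }
    assert (hnorm (L (hscal (/ s) u)) <= c).
    { apply Hub. exists (hscal (/ s) u). split; auto. rewrite hnorm_scal. fold s.
      rewrite Rabs_right. field_simplify; lra. apply Rle_ge, Rlt_le, Rinv_0_lt_compat; auto. }
    rewrite Hs, hnorm_scal in H. rewrite Rabs_right in H by (apply Rle_ge, Rlt_le, Rinv_0_lt_compat; auto).
    assert (hnorm (L u) <= c * s).
    { apply (Rmult_le_reg_l (/ s)). apply Rinv_0_lt_compat; auto.
      replace (/ s * (c * s)) with c by (field; lra). lra. }
    rewrite <- !hnorm_sq. fold s. pose proof (hnorm_pos _ (L u)). simpl. nra.
Qed.

Lemma L_bound_n u : hnorm (L u) <= c * hnorm u.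
Proof.
  pose proof (L_bound u). rewrite <- !hnorm_sq in H. pose proof (hnorm_pos _ (L u)). pose proof (hnorm_pos _ u).
  pose proof c_nonneg. apply Rsqr_incr_0_var; [|nra]. unfold Rsqr. simpl in H. nra.
Qed.

Lemma Ls_bound w : hinner (Ls w) (Ls w) <= c ^ 2 * hinner w w.
Proof.
  assert (E: hinner (Ls w) (Ls w) = hinner (L (Ls w)) w) by (rewrite HLs; reflexivity).
  pose proof (cs _ (L (Ls w)) w). pose proof (L_bound_n (Ls w)).
  pose proof (hnorm_pos _ (Ls w)). pose proof (hnorm_pos _ w). pose proof (hnorm_pos _ (L (Ls w))). pose proof c_nonneg.
  rewrite <- !hnorm_sq. rewrite <- hnorm_sq in E.
  assert (hnorm (Ls w) <= c * hnorm w).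
  { destruct (Req_dec (hnorm (Ls w)) 0). nra.
    assert (hnorm (Ls w) * hnorm (Ls w) <= hnorm (Ls w) * (c * hnorm w)).
    { simpl in E. assert (hnorm (L (Ls w)) * hnorm w <= c * hnorm (Ls w) * hnorm w) by (apply Rmult_le_compat_r; auto). nra. }
    apply (Rmult_le_reg_l (hnorm (Ls w))); lra. }
  simpl. nra.
Qed.
End Ops.

Lemma B_comp (H1 H2 G1 : Hilbert) (L1 : H1 -> G1) (L2 : H2 -> G1) (Ls1 : G1 -> H1)
  (HL1 : is_bounded_linear L1) (HL2 : is_bounded_linear L2) (HLs : is_adjoint L1 Ls1) a1 a2 b1 b2 :
  hsub (Ls1 (hsub (L1 a1) (L2 a2))) (Ls1 (hsub (L1 b1) (L2 b2))) = Ls1 (hsub (L1 (hsub a1 b1)) (L2 (hsub a2 b2))).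
Proof.
  rewrite <- (Ls_sub _ _ L1 Ls1 HLs). f_equal. rewrite (L_sub _ _ L1 HL1), (L_sub _ _ L2 HL2). apply veq. iexp. ring.
Qed.
Lemma coco_prod m (Hm : (1 <= m)%nat) (G : Hilbert) (H : Idx m -> Hilbert)
  (L : forall i, H i -> G) (Ls : forall i, G -> H i) (nL : Idx m -> R)
  (HL : forall i, is_bounded_linear (L i)) (HLs : forall i, is_adjoint (L i) (Ls i))
  (HnL : forall i, is_opnorm (L i) (nL i)) (M : R) (HM : forall i, nL i ^ 2 <= M) (Mpos : 0 < M)
  (X Y : Prod H) :
  / (2 * M) * sumIdx (fun i => hinner
      (hsub (Ls i (hsub (L i (X i)) (L (next i) (X (next i))))) (Ls i (hsub (L i (Y i)) (L (next i) (Y (next i))))))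
      (hsub (Ls i (hsub (L i (X i)) (L (next i) (X (next i))))) (Ls i (hsub (L i (Y i)) (L (next i) (Y (next i)))))))
  <= sumIdx (fun i => hinner (hsub (X i) (Y i))
      (hsub (Ls i (hsub (L i (X i)) (L (next i) (X (next i))))) (Ls i (hsub (L i (Y i)) (L (next i) (Y (next i))))))).
Proof.
  set (D := fun i => hsub (X i) (Y i)).
  set (w := fun i => hsub (L i (D i)) (L (next i) (D (next i)))).
  assert (Ec: forall i, hsub (Ls i (hsub (L i (X i)) (L (next i) (X (next i))))) (Ls i (hsub (L i (Y i)) (L (next i) (Y (next i))))) = Ls i (w i)).
  { intro i. unfold w, D. apply (B_comp _ _ _ _ _ _ (HL i) (HL (next i)) (HLs i)). }
  match goal with |- _ * sumIdx ?g <= sumIdx ?h =>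
    assert (E1: sumIdx g = sumIdx (fun i => hinner (Ls i (w i)) (Ls i (w i))))
      by (apply sumIdx_ext; intro i; cbv beta; rewrite Ec; reflexivity);
    assert (E2: sumIdx h = sumIdx (fun i => / 2 * hinner (w i) (w i) + / 2 * hinner (L i (D i)) (L i (D i)) + (- / 2) * hinner (L (next i) (D (next i))) (L (next i) (D (next i)))))
  end.
  { apply sumIdx_ext. intro i. cbv beta. rewrite Ec. fold (D i). rewrite <- (HLs i). unfold w. iexp. field. }
  rewrite E1, E2.
  rewrite !sumIdx_plus, !sumIdx_scal.
  pose proof (sumIdx_cyc m (fun j => hinner (L j (D j)) (L j (D j))) Hm) as Cy. cbv beta in Cy. rewrite Cy.
  assert (sumIdx (fun i => hinner (Ls i (w i)) (Ls i (w i))) <= M * sumIdx (fun i => hinner (w i) (w i))).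
  { rewrite <- sumIdx_scal. apply sumIdx_le. intro i.
    eapply Rle_trans. apply (Ls_bound _ _ (L i) (Ls i) (nL i) (HL i) (HLs i) (HnL i)).
    apply Rmult_le_compat_r. apply hinner_pos. apply HM. }
  assert (/ (2 * M) * M = / 2) by (field; lra).
  assert (0 < / (2 * M)) by (apply Rinv_0_lt_compat; lra).
  apply Rmult_le_compat_l with (r := / (2 * M)) in H0; [|lra].
  rewrite <- Rmult_assoc, H1 in H0. lra.
Qed.

Lemma prod_summable m (H : Idx m -> Hilbert) (a : forall i, nat -> H i) :
  (forall i, abs_summable (a i)) -> @abs_summable (PH m H) (fun n i => a i n).
Proof.
  intros Ha.
  assert (X: forall i, {A | forall N, sum_f_R0 (fun n => hnorm (a i n)) N <= A})
    by (intro i; apply constructive_indefinite_description; apply Ha).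
  exists (sumIdx (fun i => proj1_sig (X i))). intro N.
  apply Rle_trans with (sum_f_R0 (fun n => sumIdx (fun i => hnorm (a i n))) N).
  - apply sum_Rle. intros n _. exact (sumIdx_sqrt m (fun i => hinner (a i n) (a i n)) (fun i => hinner_pos _)).
  - rewrite (sumIdx_sum_f m (fun n i => hnorm (a i n))). apply sumIdx_le. intro i. apply (proj2_sig (X i)).
Qed.

Theorem proposition4p7
  (m : nat) (Hm : (2 <= m)%nat)
  (G : Hilbert) (H : Idx m -> Hilbert)
  (f : Prod H -> ER) (Hf : Gamma0 f)
  (L : forall i : Idx m, H i -> G) (Ls : forall i : Idx m, G -> H i)
  (nL : Idx m -> R)
  (HL : forall i, is_bounded_linear (L i))
  (HLs : forall i, is_adjoint (L i) (Ls i))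
  (HnL : forall i, is_opnorm (L i) (nL i))
  (Hnz : exists i (x : H i), L i x <> hzero)
  (Hsol : exists z : Prod H,
     in_subdiff f z (fun i => Ls i (hsub (L (next i) (z (next i))) (L i (z i)))))
  (eps : R) (gamma : nat -> R)
  (Heps : 0 < eps < 2 / (2 * maxIdx (fun i => (nL i)^2) + 1))
  (Hgamma : forall n, eps <= gamma n <= (2 - eps) / (2 * maxIdx (fun i => (nL i)^2)))
  (x a b : forall i : Idx m, nat -> H i)
  (Ha : forall i, abs_summable (a i))
  (Hb : forall i, abs_summable (b i))
  (Hiter : forall n,
     is_prox (gamma n) f
       (fun i => hsub (x i n)
                   (hscal (gamma n)
                      (hadd (Ls i (hsub (L i (x i n)) (L (next i) (x (next i) n))))
                            (a i n))))
       (fun i => hsub (x i (S n)) (b i n))) :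
  exists xb : Prod H,
    forall i : Idx m,
      (forall y : H i,
         ERle (ERadd (f xb) (Fin (/2 * (hnorm (hsub (L i (xb i)) (L (next i) (xb (next i)))))^2)))
              (ERadd (f (upd xb i y))
                     (Fin (/2 * (hnorm (hsub (L i y) (L (next i) (xb (next i)))))^2))))
      /\ weak_cv (x i) (xb i)
      /\ strong_cv
           (fun n => Ls i (hsub (L i (hsub (x i n) (xb i)))
                                (L (next i) (hsub (x (next i) n) (xb (next i))))))
           hzero.
Proof.
  destruct Hf as [_ [Hconv Hlsc]].
  set (M := maxIdx (fun i => nL i ^ 2)) in *.
  assert (HM: forall i, nL i ^ 2 <= M) by (intro i; apply (maxIdx_ge m (fun i => nL i ^ 2) i)).
  assert (Mpos: 0 < M).
  { destruct Hnz as [i0 [x0 Hx0]].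
    pose proof (L_bound _ _ (L i0) (nL i0) (HL i0) (HnL i0) x0) as LB.
    assert (0 < hinner (L i0 x0) (L i0 x0)).
    { pose proof (hinner_pos (L i0 x0)). destruct (Req_dec (hinner (L i0 x0) (L i0 x0)) 0) as [E|E].
      apply hinner_def in E. contradiction. lra. }
    pose proof (hinner_pos x0). specialize (HM i0). pose proof (pow2_ge_0 (nL i0)).
    assert (0 < nL i0 ^ 2). { destruct (Req_dec (nL i0 ^ 2) 0) as [E|E]. rewrite E in LB. lra. lra. }
    lra. }
  destruct Hsol as [z Hz].
  set (Bop := (fun (X : Prod H) (i : Idx m) => Ls i (hsub (L i (X i)) (L (next i) (X (next i))))) : car (PH m H) -> car (PH m H)).
  assert (HzS: Sol (PH m H) f Bop z).
  { destruct Hz as [Hz1 Hz2]. split; auto.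
    replace (@hopp (PH m H) (Bop z)) with (fun i => Ls i (hsub (L (next i) (z (next i))) (L i (z i)))).
    exact Hz2.
    apply functional_extensionality_dep. intro i.
    change (Ls i (hsub (L (next i) (z (next i))) (L i (z i))) = hopp (Ls i (hsub (L i (z i)) (L (next i) (z (next i)))))).
    apply (Ls_opp_sub _ _ _ _ (HLs i)). }
  assert (kpos : 0 < / (2 * M)) by (apply Rinv_0_lt_compat; lra).
  assert (coco : forall X Y : PH m H, / (2 * M) * hinner (hsub (Bop X) (Bop Y)) (hsub (Bop X) (Bop Y)) <= hinner (hsub X Y) (hsub (Bop X) (Bop Y))).
  { intros X Y. exact (coco_prod m ltac:(lia) G H L Ls nL HL HLs HnL M HM Mpos X Y). }
  assert (Hg : forall n, eps <= gamma n <= (2 - eps) * / (2 * M)) by exact Hgamma.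
  set (xP := fun n => (fun i => x i n) : Prod H).
  assert (Hit : forall n, is_proxK (PH m H) f (gamma n) (yv (PH m H) Bop gamma xP (fun n i => a i n) n) (pv (PH m H) xP (fun n i => b i n) n)).
  { intro n. exact (Hiter n). }
  destruct (FB_main (PH m H) f Hconv Hlsc Bop (/ (2 * M)) kpos coco eps gamma (proj1 Heps) Hg xP
     (fun n i => a i n) (fun n i => b i n) (prod_summable m H a Ha) (prod_summable m H b Hb) Hit z HzS)
    as [c [Sc [Wc Bc]]].
  exists c. intro i. split; [|split].
  - intro y. destruct (Sol_real _ _ _ _ Sc) as [fc [Ec Hcr]].
    rewrite Ec. destruct (f (upd c i y)) as [vq|] eqn:Eq; [|simpl; exact I].
    cbn [ERadd ERle]. rewrite !hnorm_sq.
    specialize (Hcr (upd c i y) vq Eq).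
    assert (E: @hinner (PH m H) (@hsub (PH m H) (upd c i y) c) (@hopp (PH m H) (Bop c)) = hinner (hsub y (c i)) (hopp (Bop c i))).
    { change (sumIdx (fun j => hinner (hsub (upd c i y j) (c j)) (hopp (Bop c j))) = hinner (hsub y (c i)) (hopp (Bop c i))).
      rewrite (sumIdx_single _ _ i). rewrite upd_same. reflexivity.
      intros j Hj. rewrite upd_other by auto. iexp. ring. }
    rewrite E in Hcr. unfold Bop in Hcr. rewrite hinner_opp_r, <- (HLs i) in Hcr.
    rewrite (L_sub _ _ (L i) (HL i)) in Hcr.
    pose proof (hinner_pos (hsub (L i y) (L i (c i)))) as P0.
    revert Hcr P0. iexp. intros. lra.
  - intro v. pose proof (Wc (single m H i v)) as W.
    change (Un_cv (fun n => pinner (xP n) (single m H i v)) (pinner c (single m H i v))) in W.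
    rewrite (pinner_single m H c i v) in W.
    eapply Un_cv_ext. 2: exact W. intro n. apply pinner_single.
  - unfold strong_cv.
    apply (squeeze0 _ (fun n => sqrt (@hinner (PH m H) (hsub (Bop (xP n)) (Bop c)) (hsub (Bop (xP n)) (Bop c))))).
    + intro; apply hnorm_pos.
    + exists 0%nat. intros n _.
      assert (Ev: hsub (Ls i (hsub (L i (hsub (x i n) (c i))) (L (next i) (hsub (x (next i) n) (c (next i)))))) hzero
                  = hsub (Bop (xP n) i) (Bop c i)).
      { unfold Bop, xP. rewrite (B_comp _ _ _ _ _ _ (HL i) (HL (next i)) (HLs i)). apply veq. iexp. ring. }
      rewrite Ev. unfold hnorm. apply sqrt_le_1_alt.
      exact (pr_comp_le m H (@hsub (PH m H) (Bop (xP n)) (Bop c)) i).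
    + apply sq_cv_sqrt. intro; apply hinner_pos. exact Bc.
Qed.
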